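(* Let $T=((\Omega,\mathcal{A}),\{(\Omega,\mathcal{M}_i)\}_{i\in N},\{t_i\}_{i\in N})$ be a type space. Then exactly one of the following holds: (a) the players' beliefs in $T$ are strongly consistent; (b) there exists an acceptable bet in $T$.
   Context: A field on a set $X$ is a collection of subsets of $X$ containing $X$ and closed under complements and finite intersections. For a field $\mathcal{A}$ on $\Omega$, $\mathrm{pba}(\Omega,\mathcal{A})$ is the set of finitely additive nonnegative $P:\mathcal{A}\to\mathbb{R}$ with $P(\Omega)=1$; $\mathrm{ba}(\Omega,\mathcal{A})$ the bounded finitely additive real set functions on $\mathcal{A}$; $B(\Omega,\mathcal{A})$ the sup-norm closure of the linear span of indicators of sets in $\mathcal{A}$. $\mathrm{ba}(\Omega,\mathcal{A})$ carries the weak* topology (weakest making $\mu\mapsto\int f\,d\mu$ continuous for all $f\in B(\Omega,\mathcal{A})$), finite powers $\mathrm{ba}(\Omega,\mathcal{A})^k$ the product topology; $\overline{\,\cdot\,}^\ast$ denotes closure in it. $\mathrm{conv}$ is convex hull, $\mathrm{cone}(C)=\{\beta x:\beta\ge0,x\in C\}$, $\mathrm{diag}\,C^k=\{(x,\dots,x):x\in C\}$. A type space is $T=((\Omega,\mathcal{A}),\{(\Omega,\mathcal{M}_i)\}_{i\in N},\{t_i\}_{i\in N})$ with $N$ a nonempty set of players, fields $\mathcal{M}_i\subseteq\mathcal{A}$ on a set $\Omega$, and $t_i:\Omega\times\mathcal{A}\to[0,1]$ with: $t_i(\omega,\cdot)\in\mathrm{pba}(\Omega,\mathcal{A})$; $t_i(\cdot,E)\in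 B(\Omega,\mathcal{M}_i)$ for all $E\in\mathcal{A}$; $t_i(\omega,E)=1$ whenever $E\in\mathcal{M}_i$, $\omega\in E$. Let $\Pi_i=\overline{\mathrm{conv}\{t_i(\omega,\cdot):\omega\in\Omega\}}^\ast$ and, for $\omega^\ast\in\Omega$, $\Pi_i^{-\omega^\ast}=\overline{\mathrm{conv}\{t_i(\omega,\cdot):\omega\in\Omega,\ t_i(\omega,\cdot)\ne t_i(\omega^\ast,\cdot)\}}^\ast$. The players' beliefs are strongly consistent if for every finite $I\subseteq N$, every $i^\ast\in I$ and every $\omega^\ast\in\Omega$, $t_{i^\ast}(\omega^\ast,\cdot)\in\overline{\mathrm{cone}\big(\prod_{i\in I\setminus\{i^\ast\}}\Pi_i\big)-\mathrm{cone}\big(\mathrm{diag}(\Pi_{i^\ast}^{-\omega^\ast})^{|I|-1}\big)}^\ast$, where $t_{i^\ast}(\omega^\ast,\cdot)$ is identified with the element of $\mathrm{ba}(\Omega,\mathcal{A})^{I\setminus\{i^\ast\}}$ all of whose coordinates equal it. For $I\subseteq N$, a nonempty $S\subseteq\Omega$ is an $I$-common certainty component if there is $E\in\mathcal{A}$ with $E\subseteq S$ and $t_i(\omega,E)=1$ for all $\omega\in S$, $i\in I$; a set $E$ is $I$-commonly certain at $\omega$ if there is such $S$ with $\omega\in S\subseteq E$. A bet is a family $(f_i)_{i\in I}$, $I\subseteq N$ finite, $f_i\in B(\Omega,\mathcal{A})$, with $\sum_{i\in I}f_i(\omega)=0$ for all $\omega$. A bet is acceptable if for every $\omega\in\Omega$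 the set $\{\omega':\int f_i\,dt_i(\omega',\cdot)\ge0\ \forall i\in I\}$ is $I$-commonly certain at $\omega$, and there exist $\omega^\ast\in\Omega$, $i^\ast\in I$ with $\int f_{i^\ast}\,dt_{i^\ast}(\omega^\ast,\cdot)>0$. *)

(* Defs.v *)
From Stdlib Require Import Reals List ClassicalEpsilon.
Open Scope R_scope.
Set Implicit Arguments.

(* A set function on subsets of Omega; only its values on the field matter. *)
Definition setfun (Omega : Type) := (Omega -> Prop) -> R.

Definition is_field (X : Type) (F : (X -> Prop) -> Prop) : Prop :=
  F (fun _ => True) /\
  (forall E, F E -> F (fun x => ~ E x)) /\
  (forall E G, F E -> F G -> F (fun x => E x /\ G x)).

Definition fin_additive (X : Type) (A : (X -> Prop) -> Prop) (mu : setfun X) : Prop :=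
  forall E G, A E -> A G -> (forall x, E x -> G x -> False) ->
    mu (fun x => E x \/ G x) = mu E + mu G.

Definition is_pba (X : Type) (A : (X -> Prop) -> Prop) (P : setfun X) : Prop :=
  fin_additive A P /\ (forall E, A E -> 0 <= P E) /\ P (fun _ => True) = 1.

Definition is_ba (X : Type) (A : (X -> Prop) -> Prop) (mu : setfun X) : Prop :=
  fin_additive A mu /\ exists M, forall E, A E -> Rabs (mu E) <= M.

Definition eqA (X : Type) (A : (X -> Prop) -> Prop) (mu nu : setfun X) : Prop :=
  forall E, A E -> mu E = nu E.

Definition indic (X : Type) (E : X -> Prop) (x : X) : R :=
  if excluded_middle_informative (E x) then 1 else 0.

Definition simple_eval (X : Type) (s : list (R * (X -> Prop))) (x : X) : R :=
  fold_right (fun p acc => fst p * indic (snd p) x + acc) 0 s.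

Definition simple_in (X : Type) (A : (X -> Prop) -> Prop) (s : list (R * (X -> Prop))) : Prop :=
  Forall (fun p => A (snd p)) s.

Definition simple_int (X : Type) (mu : setfun X) (s : list (R * (X -> Prop))) : R :=
  fold_right (fun p acc => fst p * mu (snd p) + acc) 0 s.

(* B(Omega, A): sup-norm closure of the span of indicators of sets in A *)
Definition in_B (X : Type) (A : (X -> Prop) -> Prop) (f : X -> R) : Prop :=
  forall eps, 0 < eps -> exists s, simple_in A s /\
    forall x, Rabs (f x - simple_eval s x) <= eps.

Definition is_integral (X : Type) (A : (X -> Prop) -> Prop) (mu : setfun X)
    (f : X -> R) (r : R) : Prop :=
  forall eps, 0 < eps -> exists delta, 0 < delta /\
    forall s, simple_in A s -> (forall x, Rabs (f x - simple_eval s x) <= delta) ->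
      Rabs (r - simple_int mu s) <= eps.

(* the integral  \int f dmu  (unique for mu in ba, f in B) *)
Definition integral (X : Type) (A : (X -> Prop) -> Prop) (mu : setfun X) (f : X -> R) : R :=
  epsilon (inhabits 0) (is_integral A mu f).

(* weak* closure in ba(Omega,A): x in ba, and every basic weak* neighbourhood
   of x meets C *)
Definition wclosure (X : Type) (A : (X -> Prop) -> Prop) (C : setfun X -> Prop)
    (x : setfun X) : Prop :=
  is_ba A x /\
  forall (fs : list (X -> R)) eps, 0 < eps -> Forall (in_B A) fs ->
    exists y, C y /\
      Forall (fun f => Rabs (integral A x f - integral A y f) < eps) fs.

(* closure in the product topology of ba(Omega,A)^J, J a set of indices;
   tuples are functions N -> setfun X, only coordinates in J matter *)
Definition wclosureJ (N X : Type) (A : (X -> Prop) -> Prop) (J : N -> Prop)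
    (C : (N -> setfun X) -> Prop) (x : N -> setfun X) : Prop :=
  (forall j, J j -> is_ba A (x j)) /\
  forall (fs : list (N * (X -> R))) eps, 0 < eps ->
    Forall (fun p => J (fst p) /\ in_B A (snd p)) fs ->
    exists y, C y /\
      Forall (fun p => Rabs (integral A (x (fst p)) (snd p)
                             - integral A (y (fst p)) (snd p)) < eps) fs.

(* convex hull (up to equality on A) *)
Definition conv (X : Type) (A : (X -> Prop) -> Prop) (S : setfun X -> Prop)
    (mu : setfun X) : Prop :=
  exists l : list (R * setfun X),
    Forall (fun p => 0 <= fst p /\ S (snd p)) l /\
    fold_right (fun p acc => fst p + acc) 0 l = 1 /\
    eqA A mu (fun E => fold_right (fun p acc => fst p * snd p E + acc) 0 l).

Definition cone (N X : Type) (C : (N -> setfun X) -> Prop) (x : N -> setfun X) : Prop :=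
  x = (fun _ _ => 0) \/
  exists beta y, 0 <= beta /\ C y /\ x = (fun j E => beta * y j E).

Definition setdiff (N X : Type) (C D : (N -> setfun X) -> Prop) (x : N -> setfun X) : Prop :=
  exists y z, C y /\ D z /\ x = (fun j E => y j E - z j E).

Definition prodJ (N X : Type) (J : N -> Prop) (P : N -> setfun X -> Prop)
    (x : N -> setfun X) : Prop :=
  forall j, J j -> P j (x j).

Definition diagJ (N X : Type) (J : N -> Prop) (P : setfun X -> Prop)
    (x : N -> setfun X) : Prop :=
  exists mu, P mu /\ forall j, J j -> x j = mu.

Definition is_type_space (N Omega : Type) (A : (Omega -> Prop) -> Prop)
    (M : N -> (Omega -> Prop) -> Prop) (t : N -> Omega -> setfun Omega) : Prop :=
  inhabited N /\
  is_field A /\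
  (forall i, is_field (M i) /\ forall E, M i E -> A E) /\
  (forall i w, is_pba A (t i w)) /\
  (forall i E, A E -> in_B (M i) (fun w => t i w E)) /\
  (forall i w E, M i E -> E w -> t i w E = 1).

Definition Pi (N Omega : Type) (A : (Omega -> Prop) -> Prop)
    (t : N -> Omega -> setfun Omega) (i : N) : setfun Omega -> Prop :=
  wclosure A (conv A (fun nu => exists w, nu = t i w)).

Definition Pi_minus (N Omega : Type) (A : (Omega -> Prop) -> Prop)
    (t : N -> Omega -> setfun Omega) (i : N) (wstar : Omega) : setfun Omega -> Prop :=
  wclosure A (conv A (fun nu => exists w, nu = t i w /\ ~ eqA A (t i w) (t i wstar))).

Definition strongly_consistent (N Omega : Type) (A : (Omega -> Prop) -> Prop)
    (t : N -> Omega -> setfun Omega) : Prop :=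
  forall (I : list N), NoDup I ->
  forall istar, In istar I ->
  forall wstar : Omega,
    let J := fun i => In i I /\ i <> istar in
    wclosureJ A J
      (setdiff (cone (prodJ J (Pi A t)))
               (cone (diagJ J (Pi_minus A t istar wstar))))
      (fun _ => t istar wstar).

Definition cc_component (N Omega : Type) (A : (Omega -> Prop) -> Prop)
    (t : N -> Omega -> setfun Omega) (I : list N) (S : Omega -> Prop) : Prop :=
  (exists w, S w) /\
  exists E, A E /\ (forall w, E w -> S w) /\
    forall w i, S w -> In i I -> t i w E = 1.

Definition commonly_certain (N Omega : Type) (A : (Omega -> Prop) -> Prop)
    (t : N -> Omega -> setfun Omega) (I : list N) (E : Omega -> Prop) (w : Omega) : Prop :=
  exists S, cc_component A t I S /\ S w /\ forall w', S w' -> E w'.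

Definition is_bet (N Omega : Type) (A : (Omega -> Prop) -> Prop)
    (I : list N) (f : N -> Omega -> R) : Prop :=
  NoDup I /\ (forall i, In i I -> in_B A (f i)) /\
  forall w, fold_right (fun i acc => f i w + acc) 0 I = 0.

Definition acceptable_bet (N Omega : Type) (A : (Omega -> Prop) -> Prop)
    (t : N -> Omega -> setfun Omega) (I : list N) (f : N -> Omega -> R) : Prop :=
  is_bet A I f /\
  (forall w, commonly_certain A t I
     (fun w' => forall i, In i I -> 0 <= integral A (t i w') (f i)) w) /\
  exists wstar istar, In istar I /\ 0 < integral A (t istar wstar) (f istar).

(* Main.v *)
Require Import Defs.
From Stdlib Require Import Reals List Lra Lia ClassicalEpsilon Classical FunctionalExtensionality PropExtensionality.
Open Scope R_scope.


Definition Inf (S : R -> Prop) : R :=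
  epsilon (inhabits 0) (fun m => (forall z, S z -> m <= z) /\
                                 (forall m', (forall z, S z -> m' <= z) -> m' <= m)).

Lemma Inf_spec (S : R -> Prop) (b : R) : (exists z, S z) -> (forall z, S z -> b <= z) ->
  (forall z, S z -> Inf S <= z) /\ (forall m', (forall z, S z -> m' <= z) -> m' <= Inf S).
Proof.
  intros [z0 Hz0] Hb. unfold Inf. apply epsilon_spec.
  destruct (completeness (fun y => S (- y))) as [m [Hm1 Hm2]].
  - exists (- b). intros y Hy. specialize (Hb _ Hy). lra.
  - exists (- z0). rewrite Ropp_involutive. exact Hz0.
  - exists (- m). split.
    + intros z Hz. assert (- z <= m). { apply Hm1. rewrite Ropp_involutive. exact Hz. } lra.
    + intros m' Hm'. assert (m <= - m'). { apply Hm2. intros y Hy. specialize (Hm' _ Hy). lra. } lra.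
Qed.

Lemma Inf_ext (S1 S2 : R -> Prop) : (forall z, S1 z <-> S2 z) -> Inf S1 = Inf S2.
Proof.
  intros H. assert (S1 = S2) as ->. { apply functional_extensionality. intros z. apply propositional_extensionality. apply H. } reflexivity.
Qed.

Definition vec := nat -> R.
Definition vadd (x y : vec) : vec := fun k => x k + y k.
Definition vscal (s : R) (x : vec) : vec := fun k => s * x k.
Definition vzero : vec := fun _ => 0.

Fixpoint dot (n : nat) (l x : vec) : R :=
  match n with O => 0 | S m => dot m l x + l m * x m end.

Lemma dot_ext n l1 l2 x : (forall k, (k < n)%nat -> l1 k = l2 k) -> dot n l1 x = dot n l2 x.
Proof.
  induction n; simpl; intros H; auto.
  rewrite IHn by (intros; apply H; lia). rewrite H by lia. reflexivity.
Qed.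

Lemma dot_scal n l s x : dot n l (vscal s x) = s * dot n l x.
Proof. induction n; simpl; [ring|]. rewrite IHn. unfold vscal. ring. Qed.

Lemma dot_add n l x y : dot n l (vadd x y) = dot n l x + dot n l y.
Proof. induction n; simpl; [ring|]. rewrite IHn. unfold vadd. ring. Qed.

Definition sublin (p : vec -> R) : Prop :=
  (forall x y, p (vadd x y) <= p x + p y) /\
  (forall s x, 0 < s -> p (vscal s x) = s * p x).

Definition dep (n : nat) (p : vec -> R) : Prop :=
  forall x y, (forall k, (k < n)%nat -> x k = y k) -> p x = p y.

Lemma sublin_zero p : sublin p -> p vzero = 0.
Proof.
  intros [_ H]. assert (E : vscal 2 vzero = vzero).
  { apply functional_extensionality; intro k; unfold vscal, vzero; ring. }
  specialize (H 2 vzero ltac:(lra)). rewrite E in H. lra.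
Qed.

Definition qf (p : vec -> R) (T : R -> Prop) (u : vec) (c : R) (x : vec) : R :=
  Inf (fun z => exists t, T t /\ z = p (vadd x (vscal t u)) - t * c).

Section QF.
Variables (p : vec -> R) (T : R -> Prop) (u : vec) (c : R).
Hypothesis Hp : sublin p.
Hypothesis T0 : T 0.
Hypothesis Tadd : forall a b, T a -> T b -> T (a + b).
Hypothesis Tscal : forall s a, 0 < s -> T a -> T (s * a).
Hypothesis Tc : forall t, T t -> t * c <= p (vscal t u).

Lemma qf_spec x :
  (forall z, (exists t, T t /\ z = p (vadd x (vscal t u)) - t * c) -> qf p T u c x <= z) /\
  (forall m', (forall z, (exists t, T t /\ z = p (vadd x (vscal t u)) - t * c) -> m' <= z) -> m' <= qf p T u c x).
Proof.
  unfold qf. apply Inf_spec with (b := - p (vscal (-1) x)).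
  - exists (p (vadd x (vscal 0 u)) - 0 * c). exists 0. split; auto.
  - intros z [t [Ht ->]]. destruct Hp as [Hsub _].
    pose proof (Hsub (vadd x (vscal t u)) (vscal (-1) x)) as H1.
    assert (E : vadd (vadd x (vscal t u)) (vscal (-1) x) = vscal t u).
    { apply functional_extensionality; intro k; unfold vadd, vscal; ring. }
    rewrite E in H1. pose proof (Tc t Ht). lra.
Qed.

Lemma qf_le x t : T t -> qf p T u c x <= p (vadd x (vscal t u)) - t * c.
Proof. intros Ht. apply (proj1 (qf_spec x)). exists t; auto. Qed.

Lemma qf_le_p x : qf p T u c x <= p x.
Proof.
  pose proof (qf_le x 0 T0) as H.
  assert (E : vadd x (vscal 0 u) = x).
  { apply functional_extensionality; intro k; unfold vadd, vscal; ring. }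
  rewrite E in H. lra.
Qed.

Lemma qf_sublin : sublin (qf p T u c).
Proof.
  destruct Hp as [Hsub Hhom]. split.
  - intros x y.
    assert (H1 : forall t2, T t2 -> qf p T u c (vadd x y) - (p (vadd y (vscal t2 u)) - t2 * c) <= qf p T u c x).
    { intros t2 Ht2. apply (proj2 (qf_spec x)). intros z [t1 [Ht1 ->]].
      pose proof (qf_le (vadd x y) (t1 + t2) (Tadd _ _ Ht1 Ht2)) as H.
      pose proof (Hsub (vadd x (vscal t1 u)) (vadd y (vscal t2 u))) as H'.
      assert (E : vadd (vadd x y) (vscal (t1 + t2) u) = vadd (vadd x (vscal t1 u)) (vadd y (vscal t2 u))).
      { apply functional_extensionality; intro k; unfold vadd, vscal; ring. }
      rewrite E in H. lra. }
    assert (H2 : qf p T u c (vadd x y) - qf p T u c x <= qf p T u c y).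
    { apply (proj2 (qf_spec y)). intros z [t2 [Ht2 ->]]. specialize (H1 t2 Ht2). lra. }
    lra.
  - intros s x Hs. apply Rle_antisym.
    + assert (qf p T u c (vscal s x) / s <= qf p T u c x).
      { apply (proj2 (qf_spec x)). intros z [t [Ht ->]].
        pose proof (qf_le (vscal s x) (s * t) (Tscal s t Hs Ht)) as H.
        assert (E : vadd (vscal s x) (vscal (s * t) u) = vscal s (vadd x (vscal t u))).
        { apply functional_extensionality; intro k; unfold vadd, vscal; ring. }
        rewrite E, Hhom in H by auto.
        apply Rmult_le_reg_l with s; auto. field_simplify; [|lra]. lra. }
      apply Rmult_le_reg_l with (/ s). apply Rinv_0_lt_compat; auto.
      replace (/ s * (s * qf p T u c x)) with (qf p T u c x) by (field; lra).
      rewrite Rmult_comm. exact H.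
    + apply (proj2 (qf_spec (vscal s x))). intros z [t [Ht ->]].
      assert (Ht' : T (/ s * t)) by (apply Tscal; auto; apply Rinv_0_lt_compat; auto).
      pose proof (qf_le x _ Ht') as H.
      assert (E : vadd (vscal s x) (vscal t u) = vscal s (vadd x (vscal (/ s * t) u))).
      { apply functional_extensionality; intro k; unfold vadd, vscal; field; lra. }
      rewrite E, Hhom by auto.
      apply Rmult_le_compat_l with (r := s) in H; [|lra].
      replace (s * (p (vadd x (vscal (/ s * t) u)) - / s * t * c)) with
        (s * p (vadd x (vscal (/ s * t) u)) - t * c) in H by (field; lra). lra.
Qed.

Lemma qf_dep n : dep n p -> dep n (qf p T u c).
Proof.
  intros Hd x y Hxy. unfold qf. apply Inf_ext. intros z. split; intros [t [Ht ->]]; exists t; split; auto;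
  f_equal; apply Hd; intros k Hk; unfold vadd; rewrite Hxy by auto; reflexivity.
Qed.
End QF.

Definition unitv (m : nat) : vec := fun k => if Nat.eq_dec k m then 1 else 0.
Definition upd0 (x : vec) (m : nat) : vec := fun k => if Nat.eq_dec k m then 0 else x k.

Lemma hb : forall n p, sublin p -> dep n p -> exists l, forall x, dot n l x <= p x.
Proof.
  induction n as [|m IH]; intros p Hp Hd.
  - exists vzero. intros x. simpl. rewrite (Hd x vzero) by (intros; lia). rewrite sublin_zero; auto; lra.
  - set (c := p (unitv m)).
    assert (Hsl : sublin p) by exact Hp.
    destruct Hp as [Hsub Hhom].
    assert (H0 : p vzero = 0) by (apply sublin_zero; split; auto).
    assert (Tc : forall t, True -> t * c <= p (vscal t (unitv m))).
    { intros t _. destruct (Rlt_le_dec 0 t) as [Ht|Ht].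
      - rewrite Hhom by auto. unfold c. lra.
      - destruct (Req_dec t 0) as [->|Ht0].
        + assert (E : vscal 0 (unitv m) = vzero) by (apply functional_extensionality; intro; unfold vscal, vzero; ring).
          rewrite E, H0. lra.
        + assert (E : vscal t (unitv m) = vscal (- t) (vscal (-1) (unitv m)))
            by (apply functional_extensionality; intro; unfold vscal; ring).
          rewrite E, Hhom by lra.
          pose proof (Hsub (unitv m) (vscal (-1) (unitv m))) as Hs.
          assert (E2 : vadd (unitv m) (vscal (-1) (unitv m)) = vzero)
            by (apply functional_extensionality; intro; unfold vadd, vscal, vzero; ring).
          rewrite E2, H0 in Hs. unfold c. nra. }
    set (q := qf p (fun _ => True) (unitv m) c).
    assert (Hq : sublin q) by (apply qf_sublin; auto).
    set (p' := fun x => q (upd0 x m)).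
    assert (Hp' : sublin p').
    { destruct Hq as [Hq1 Hq2]. split.
      - intros x y. unfold p'. 
        assert (E : upd0 (vadd x y) m = vadd (upd0 x m) (upd0 y m)).
        { apply functional_extensionality; intro k; unfold upd0, vadd; destruct (Nat.eq_dec k m); ring. }
        rewrite E. apply Hq1.
      - intros s x Hs. unfold p'.
        assert (E : upd0 (vscal s x) m = vscal s (upd0 x m)).
        { apply functional_extensionality; intro k; unfold upd0, vscal; destruct (Nat.eq_dec k m); ring. }
        rewrite E. apply Hq2; auto. }
    assert (Hd' : dep m p').
    { intros x y Hxy. unfold p', q. apply qf_dep with (n := S m); auto.
      intros k Hk. unfold upd0. destruct (Nat.eq_dec k m); auto. apply Hxy. lia. }
    destruct (IH p' Hp' Hd') as [l' Hl'].
    exists (fun k => if Nat.eq_dec k m then c else l' k).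
    intros x. simpl.
    rewrite (dot_ext m _ l') by (intros k Hk; destruct (Nat.eq_dec k m); [lia|auto]).
    destruct (Nat.eq_dec m m) as [_|]; [|congruence].
    specialize (Hl' x). unfold p' in Hl'.
    assert (H : q (upd0 x m) <= p (vadd (upd0 x m) (vscal (x m) (unitv m))) - x m * c)
      by (unfold q; apply qf_le; auto).
    assert (E : vadd (upd0 x m) (vscal (x m) (unitv m)) = x).
    { apply functional_extensionality; intro k; unfold vadd, upd0, vscal, unitv; destruct (Nat.eq_dec k m); subst; ring. }
    rewrite E in H.
    lra.
Qed.

Lemma sep n p a : sublin p -> dep n p -> 0 < p a ->
  exists l, (forall x, dot n l x <= p x) /\ 0 < dot n l a.
Proof.
  intros Hp Hd Ha.
  set (q := qf p (fun t => 0 <= t) a (p a)).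
  assert (Tc : forall t, 0 <= t -> t * p a <= p (vscal t a)).
  { intros t Ht. destruct (Req_dec t 0) as [->|Hne].
    - assert (E : vscal 0 a = vzero) by (apply functional_extensionality; intro; unfold vscal, vzero; ring).
      rewrite E, sublin_zero; auto; lra.
    - rewrite (proj2 Hp) by lra. lra. }
  assert (Hq : sublin q) by (apply qf_sublin; auto; intros; nra).
  assert (Hdq : dep n q) by (apply qf_dep; auto).
  destruct (hb n q Hq Hdq) as [l Hl].
  exists l. split.
  - intros x. eapply Rle_trans; [apply Hl|]. unfold q. apply qf_le_p; auto. lra.
  - assert (H : q (vscal (-1) a) <= p (vadd (vscal (-1) a) (vscal 1 a)) - 1 * p a)
      by (unfold q; apply qf_le; auto; lra).
    assert (E : vadd (vscal (-1) a) (vscal 1 a) = vzero)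
      by (apply functional_extensionality; intro; unfold vadd, vscal, vzero; ring).
    rewrite E, sublin_zero in H by auto.
    pose proof (Hl (vscal (-1) a)) as H2. rewrite dot_scal in H2. lra.
Qed.


Lemma setext {X : Type} (P Q : X -> Prop) : (forall x, P x <-> Q x) -> P = Q.
Proof. intros H. apply functional_extensionality. intros x. apply propositional_extensionality. apply H. Qed.

Lemma small_zero x : (forall e, 0 < e -> Rabs x <= e) -> x = 0.
Proof.
  intros H. destruct (Req_dec x 0) as [|Hx]; auto.
  assert (0 < Rabs x) by (apply Rabs_pos_lt; auto).
  specialize (H (Rabs x / 2) ltac:(lra)). lra.
Qed.

Lemma Rabs_le_inv x y : Rabs x <= y -> - y <= x <= y.
Proof. intros H. unfold Rabs in H. destruct (Rcase_abs x); lra. Qed.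

Lemma Rabs_sub_le a b : Rabs (a - b) <= Rabs a + Rabs b.
Proof. unfold Rminus. eapply Rle_trans; [apply Rabs_triang|]. rewrite Rabs_Ropp. lra. Qed.

Section Int.
Variables (Omega : Type) (A : (Omega -> Prop) -> Prop).
Hypothesis HA : is_field A.

Lemma A_true : A (fun _ => True).
Proof. apply HA. Qed.
Lemma A_compl E : A E -> A (fun x => ~ E x).
Proof. apply HA. Qed.
Lemma A_inter E G : A E -> A G -> A (fun x => E x /\ G x).
Proof. apply HA. Qed.
Lemma A_empty : A (fun _ => False).
Proof.
  replace (fun _ : Omega => False) with (fun x : Omega => ~ (fun _ : Omega => True) x).
  apply A_compl, A_true. apply setext. intros; tauto.
Qed.
Lemma A_union E G : A E -> A G -> A (fun x => E x \/ G x).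
Proof.
  intros HE HG.
  replace (fun x => E x \/ G x) with (fun x => ~ (fun y => (fun z => ~ E z) y /\ (fun z => ~ G z) y) x).
  apply A_compl, A_inter; apply A_compl; auto.
  apply setext. intros x. tauto.
Qed.

Lemma fa_empty mu : fin_additive A mu -> mu (fun _ => False) = 0.
Proof.
  intros H. pose proof (H _ _ A_empty A_empty (fun x a b => a)) as H1. cbv beta in H1.
  replace (fun x : Omega => False \/ False) with (fun _ : Omega => False) in H1
    by (apply setext; intros; tauto). lra.
Qed.

Lemma fa_split mu F E : fin_additive A mu -> A F -> A E ->
  mu F = mu (fun x => F x /\ E x) + mu (fun x => F x /\ ~ E x).
Proof.
  intros H HF HE.
  rewrite <- H; [| apply A_inter; auto | apply A_inter; auto; apply A_compl; auto | intros x [_ a] [_ b]; auto].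
  f_equal. apply setext. intros x. tauto.
Qed.

Definition smap (c : R) (s : list (R * (Omega -> Prop))) := map (fun p => (c * fst p, snd p)) s.

Lemma eval_app (s1 s2 : list (R * (Omega -> Prop))) x : simple_eval (s1 ++ s2) x = simple_eval s1 x + simple_eval s2 x.
Proof. induction s1; simpl; [ring|]. rewrite IHs1. ring. Qed.
Lemma int_app (mu : setfun Omega) s1 s2 : simple_int mu (s1 ++ s2) = simple_int mu s1 + simple_int mu s2.
Proof. induction s1; simpl; [ring|]. rewrite IHs1. ring. Qed.
Lemma in_app s1 s2 : simple_in A s1 -> simple_in A s2 -> simple_in A (s1 ++ s2).
Proof. intros; apply Forall_app; auto. Qed.
Lemma eval_smap c (s : list (R * (Omega -> Prop))) x : simple_eval (smap c s) x = c * simple_eval s x.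
Proof. induction s; simpl; [ring|]. rewrite IHs. ring. Qed.
Lemma int_smap (mu : setfun Omega) c s : simple_int mu (smap c s) = c * simple_int mu s.
Proof. induction s; simpl; [ring|]. rewrite IHs. ring. Qed.
Lemma in_smap c s : simple_in A s -> simple_in A (smap c s).
Proof. intros H. induction H; simpl; constructor; auto. Qed.
Lemma int_lin (mu1 mu2 : setfun Omega) a b s :
  simple_int (fun E => a * mu1 E + b * mu2 E) s = a * simple_int mu1 s + b * simple_int mu2 s.
Proof. induction s; simpl; [ring|]. rewrite IHs. ring. Qed.
Lemma int_zero (s : list (R * (Omega -> Prop))) : simple_int (fun _ => 0) s = 0.
Proof. induction s; simpl; [ring|]. rewrite IHs. ring. Qed.
Lemma int_eqA mu nu s : simple_in A s -> eqA A mu nu -> simple_int mu s = simple_int nu s.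
Proof. intros H He. induction H; simpl; auto. rewrite IHForall, He; auto. Qed.

Definition foldF (mu : setfun Omega) (s : list (R * (Omega -> Prop))) (F : Omega -> Prop) :=
  fold_right (fun p acc => fst p * mu (fun x => snd p x /\ F x) + acc) 0 s.

Lemma foldF_split mu s F E : fin_additive A mu -> simple_in A s -> A F -> A E ->
  foldF mu s F = foldF mu s (fun x => F x /\ E x) + foldF mu s (fun x => F x /\ ~ E x).
Proof.
  intros Hmu Hs HF HE. induction Hs as [|[c G] s' HG Hs' IH]; simpl; [ring|].
  rewrite IH. simpl in HG.
  rewrite (fa_split mu (fun x => G x /\ F x) E) by (auto; apply A_inter; auto).
  replace (fun x => (G x /\ F x) /\ E x) with (fun x => G x /\ F x /\ E x) by (apply setext; intros; tauto).
  replace (fun x => (G x /\ F x) /\ ~ E x) with (fun x => G x /\ F x /\ ~ E x) by (apply setext; intros; tauto).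
  ring.
Qed.

Lemma key_bound mu : fin_additive A mu -> forall s, simple_in A s ->
  forall F a d, A F -> (forall x, F x -> Rabs (a + simple_eval s x) <= d) ->
  exists P Q, A P /\ A Q /\ (forall x, P x -> F x) /\ (forall x, Q x -> F x) /\
    (forall x, P x -> Q x -> False) /\
    Rabs (a * mu F + foldF mu s F) <= d * (mu P - mu Q).
Proof.
  intros Hmu s Hs. induction Hs as [|[c E] s' HE Hs' IH]; intros F a d HF Hb; simpl in *.
  - unfold foldF; simpl. rewrite Rplus_0_r.
    destruct (classic (exists x, F x)) as [[x0 Hx0]|Hne].
    + specialize (Hb x0 Hx0). rewrite Rplus_0_r in Hb.
      destruct (Rle_dec 0 (mu F)).
      * exists F, (fun _ => False). repeat split; auto using A_empty; try tauto.
        rewrite fa_empty by auto. rewrite Rabs_mult, (Rabs_right (mu F)) by lra. 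
        replace (mu F - 0) with (mu F) by ring. apply Rmult_le_compat_r; auto.
      * exists (fun _ => False), F. repeat split; auto using A_empty; try tauto.
        rewrite fa_empty by auto. rewrite Rabs_mult, (Rabs_left (mu F)) by lra.
        replace (0 - mu F) with (- mu F) by ring. apply Rmult_le_compat_r; lra.
    + assert (EF : F = fun _ => False) by (apply setext; intros x; split; [intros Hx; apply Hne; eauto | tauto]).
      subst F. exists (fun _ => False), (fun _ => False). repeat split; auto using A_empty; try tauto.
      rewrite fa_empty by auto. rewrite Rmult_0_r, Rminus_0_r, Rmult_0_r, Rabs_R0. lra.
  - set (F1 := fun x => F x /\ E x). set (F2 := fun x => F x /\ ~ E x).
    assert (HF1 : A F1) by (apply A_inter; auto).
    assert (HF2 : A F2) by (apply A_inter; auto; apply A_compl; auto).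
    destruct (IH F1 (a + c) d HF1) as [P1 [Q1 [HP1 [HQ1 [SP1 [SQ1 [D1 B1]]]]]]].
    { intros x [Fx Ex]. specialize (Hb x Fx). unfold indic in Hb.
      destruct (excluded_middle_informative (E x)); [|tauto].
      replace (a + c + simple_eval s' x) with (a + (c * 1 + simple_eval s' x)) by ring. auto. }
    destruct (IH F2 a d HF2) as [P2 [Q2 [HP2 [HQ2 [SP2 [SQ2 [D2 B2]]]]]]].
    { intros x [Fx Ex]. specialize (Hb x Fx). unfold indic in Hb.
      destruct (excluded_middle_informative (E x)); [tauto|].
      replace (a + simple_eval s' x) with (a + (c * 0 + simple_eval s' x)) by ring. auto. }
    exists (fun x => P1 x \/ P2 x), (fun x => Q1 x \/ Q2 x).
    assert (dis12 : forall x, F1 x -> F2 x -> False) by (unfold F1, F2; intros x [_ a1] [_ a2]; auto).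
    repeat split; try (apply A_union; auto).
    + intros x [H|H]; [apply SP1 in H; apply H | apply SP2 in H; apply H].
    + intros x [H|H]; [apply SQ1 in H; apply H | apply SQ2 in H; apply H].
    + intros x [H1|H1] [H2|H2]; eauto.
    + rewrite Hmu by (auto; intros x X1 X2; eauto).
      rewrite Hmu by (auto; intros x X1 X2; eauto).
      unfold foldF. simpl. fold (foldF mu s' F).
      rewrite (foldF_split mu s' F E) by auto.
      rewrite (fa_split mu F E) by auto.
      replace (fun x => E x /\ F x) with F1 by (apply setext; unfold F1; intros; tauto).
      fold F1 F2.
      replace (a * (mu F1 + mu F2) + (c * mu F1 + (foldF mu s' F1 + foldF mu s' F2)))
        with ((a + c) * mu F1 + foldF mu s' F1 + (a * mu F2 + foldF mu s' F2)) by ring.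
      eapply Rle_trans; [apply Rabs_triang|]. nra.
Qed.

Lemma foldF_true mu s : foldF mu s (fun _ => True) = simple_int mu s.
Proof.
  induction s as [|[c E] s IH]; simpl; auto. unfold foldF in *; simpl. rewrite IH.
  replace (fun x => E x /\ True) with E by (apply setext; intros; tauto). reflexivity.
Qed.

Lemma bound_total mu M : fin_additive A mu -> (forall E, A E -> Rabs (mu E) <= M) ->
  forall s d, simple_in A s -> 0 <= d -> (forall x, Rabs (simple_eval s x) <= d) ->
  Rabs (simple_int mu s) <= 2 * M * d.
Proof.
  intros Hmu HM s d Hs Hd Hb.
  destruct (key_bound mu Hmu s Hs (fun _ => True) 0 d A_true) as [P [Q [HP [HQ [_ [_ [_ B]]]]]]].
  { intros x _. rewrite Rplus_0_l. auto. }
  rewrite Rmult_0_l, Rplus_0_l, foldF_true in B.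
  pose proof (HM P HP). pose proof (HM Q HQ).
  apply Rabs_le_inv in H. apply Rabs_le_inv in H0. nra.
Qed.

Lemma is_integral_unique mu f r1 r2 : in_B A f -> is_integral A mu f r1 -> is_integral A mu f r2 -> r1 = r2.
Proof.
  intros Hf H1 H2. assert (r1 - r2 = 0); [|lra]. apply small_zero. intros e He.
  destruct (H1 (e/2) ltac:(lra)) as [d1 [Hd1 K1]]. destruct (H2 (e/2) ltac:(lra)) as [d2 [Hd2 K2]].
  destruct (Hf (Rmin d1 d2) ltac:(apply Rmin_glb_lt; auto)) as [s [Hs Ha]].
  assert (forall x, Rabs (f x - simple_eval s x) <= d1) by (intros x; eapply Rle_trans; [apply Ha|apply Rmin_l]).
  assert (forall x, Rabs (f x - simple_eval s x) <= d2) by (intros x; eapply Rle_trans; [apply Ha|apply Rmin_r]).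
  specialize (K1 s Hs H). specialize (K2 s Hs H0).
  replace (r1 - r2) with ((r1 - simple_int mu s) - (r2 - simple_int mu s)) by ring.
  eapply Rle_trans; [apply Rabs_sub_le|]. lra.
Qed.

Lemma integral_eq mu f r : in_B A f -> is_integral A mu f r -> integral A mu f = r.
Proof.
  intros Hf H. unfold integral.
  assert (is_integral A mu f (epsilon (inhabits 0) (is_integral A mu f))) by (apply epsilon_spec; eauto).
  eapply is_integral_unique; eauto.
Qed.

Lemma ba_K mu : is_ba A mu -> exists K, 0 < K /\ forall f, in_B A f -> exists r,
  forall s d, simple_in A s -> 0 <= d -> (forall x, Rabs (f x - simple_eval s x) <= d) ->
    Rabs (r - simple_int mu s) <= K * d.
Proof.
  intros [Hmu [M HM]].
  assert (M0 : 0 <= M) by (pose proof (HM _ A_true); pose proof (Rabs_pos (mu (fun _ => True))); lra).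
  exists (2 * M + 1). split; [lra|]. intros f Hf.
  assert (Hpair : forall s1 d1 s2 d2, simple_in A s1 -> 0 <= d1 -> (forall x, Rabs (f x - simple_eval s1 x) <= d1) ->
             simple_in A s2 -> 0 <= d2 -> (forall x, Rabs (f x - simple_eval s2 x) <= d2) ->
             simple_int mu s1 - simple_int mu s2 <= (2 * M + 1) * (d1 + d2)).
  { intros s1 d1 s2 d2 Hs1 Hd1 B1 Hs2 Hd2 B2.
    pose proof (bound_total mu M Hmu HM (s1 ++ smap (-1) s2) (d1 + d2)) as H.
    rewrite int_app, int_smap in H.
    assert (Rabs (simple_int mu s1 + -1 * simple_int mu s2) <= 2 * M * (d1 + d2)).
    { apply H. apply in_app; auto; apply in_smap; auto. lra.
      intros x. rewrite eval_app, eval_smap. specialize (B1 x). specialize (B2 x).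
      replace (simple_eval s1 x + -1 * simple_eval s2 x) with ((f x - simple_eval s2 x) - (f x - simple_eval s1 x)) by ring.
      eapply Rle_trans; [apply Rabs_sub_le|]. lra. }
    apply Rabs_le_inv in H0. nra. }
  set (Ez := fun z => exists s d, simple_in A s /\ 0 <= d /\ (forall x, Rabs (f x - simple_eval s x) <= d) /\
                              z = simple_int mu s - (2 * M + 1) * d).
  destruct (Hf 1 ltac:(lra)) as [s0 [Hs0 B0]].
  destruct (completeness Ez) as [r [Hr1 Hr2]].
  - exists (simple_int mu s0 + (2 * M + 1) * 1). intros z [s [d [Hs [Hd [B ->]]]]].
    pose proof (Hpair s d s0 1 Hs Hd B Hs0 ltac:(lra) B0). lra.
  - exists (simple_int mu s0 - (2 * M + 1) * 1). exists s0, 1. repeat split; auto; lra.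
  - exists r. intros s d Hs Hd B.
    assert (simple_int mu s - (2 * M + 1) * d <= r) by (apply Hr1; exists s, d; auto).
    assert (r <= simple_int mu s + (2 * M + 1) * d).
    { apply Hr2. intros z [s' [d' [Hs' [Hd' [B' ->]]]]]. pose proof (Hpair s' d' s d Hs' Hd' B' Hs Hd B). lra. }
    apply Rabs_le. lra.
Qed.

Lemma ba_integral mu : is_ba A mu -> exists K, 0 < K /\ forall f, in_B A f ->
  forall s d, simple_in A s -> 0 <= d -> (forall x, Rabs (f x - simple_eval s x) <= d) ->
    Rabs (integral A mu f - simple_int mu s) <= K * d.
Proof.
  intros Hba. destruct (ba_K mu Hba) as [K [HK H]]. exists K. split; auto. intros f Hf.
  destruct (H f Hf) as [r Hr].
  assert (is_integral A mu f r).
  { intros e He. exists (e / K). split. apply Rdiv_lt_0_compat; auto.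
    intros s Hs B. eapply Rle_trans. apply Hr; auto. apply Rlt_le, Rdiv_lt_0_compat; auto.
    right. field. lra. }
  rewrite (integral_eq mu f r); auto.
Qed.

Definition hasint (mu : setfun Omega) := forall f, in_B A f -> is_integral A mu f (integral A mu f).

Lemma ba_hasint mu : is_ba A mu -> hasint mu.
Proof.
  intros Hba f Hf. destruct (ba_integral mu Hba) as [K [HK H]].
  intros e He. exists (e / K). split. apply Rdiv_lt_0_compat; auto.
  intros s Hs B. eapply Rle_trans. apply H; auto. apply Rlt_le, Rdiv_lt_0_compat; auto.
  right. field. lra.
Qed.

Lemma is_integral_comb mu1 mu2 f r1 r2 a b :
  is_integral A mu1 f r1 -> is_integral A mu2 f r2 ->
  is_integral A (fun E => a * mu1 E + b * mu2 E) f (a * r1 + b * r2).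
Proof.
  intros H1 H2 e He. set (e' := e / (Rabs a + Rabs b + 1)).
  assert (He' : 0 < e') by (unfold e'; apply Rdiv_lt_0_compat; auto; pose proof (Rabs_pos a); pose proof (Rabs_pos b); lra).
  destruct (H1 e' He') as [d1 [Hd1 K1]]. destruct (H2 e' He') as [d2 [Hd2 K2]].
  exists (Rmin d1 d2). split. apply Rmin_glb_lt; auto.
  intros s Hs B. rewrite int_lin.
  assert (X1 : Rabs (r1 - simple_int mu1 s) <= e') by (apply K1; auto; intros x; eapply Rle_trans; [apply B|apply Rmin_l]).
  assert (X2 : Rabs (r2 - simple_int mu2 s) <= e') by (apply K2; auto; intros x; eapply Rle_trans; [apply B|apply Rmin_r]).
  replace (a * r1 + b * r2 - (a * simple_int mu1 s + b * simple_int mu2 s))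
    with (a * (r1 - simple_int mu1 s) + b * (r2 - simple_int mu2 s)) by ring.
  eapply Rle_trans; [apply Rabs_triang|]. rewrite !Rabs_mult.
  assert (e' * (Rabs a + Rabs b + 1) = e) by (unfold e'; field; pose proof (Rabs_pos a); pose proof (Rabs_pos b); lra).
  pose proof (Rabs_pos a); pose proof (Rabs_pos b).
  assert (Rabs a * Rabs (r1 - simple_int mu1 s) <= Rabs a * e') by (apply Rmult_le_compat_l; auto).
  assert (Rabs b * Rabs (r2 - simple_int mu2 s) <= Rabs b * e') by (apply Rmult_le_compat_l; auto).
  nra.
Qed.

Lemma is_integral_zero f : is_integral A (fun _ => 0) f 0.
Proof. intros e He. exists 1. split; [lra|]. intros s _ _. rewrite int_zero, Rminus_0_r, Rabs_R0. lra. Qed.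

Lemma is_integral_eqA mu nu f r : eqA A mu nu -> is_integral A mu f r -> is_integral A nu f r.
Proof.
  intros He H e Hee. destruct (H e Hee) as [d [Hd K]]. exists d. split; auto.
  intros s Hs B. rewrite <- (int_eqA mu nu s Hs He). auto.
Qed.

Lemma integral_eqA mu nu f : eqA A mu nu -> integral A mu f = integral A nu f.
Proof.
  intros He. unfold integral.
  replace (is_integral A mu f) with (is_integral A nu f); auto.
  apply functional_extensionality. intros r. apply propositional_extensionality. split;
  apply is_integral_eqA; auto. intros E HE; symmetry; auto.
Qed.

Lemma hasint_comb mu1 mu2 a b : hasint mu1 -> hasint mu2 -> hasint (fun E => a * mu1 E + b * mu2 E).
Proof.
  intros H1 H2 f Hf. rewrite (integral_eq _ f (a * integral A mu1 f + b * integral A mu2 f)); auto;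
  apply is_integral_comb; auto.
Qed.

Lemma integral_comb mu1 mu2 a b f : hasint mu1 -> hasint mu2 -> in_B A f ->
  integral A (fun E => a * mu1 E + b * mu2 E) f = a * integral A mu1 f + b * integral A mu2 f.
Proof. intros H1 H2 Hf. apply integral_eq; auto. apply is_integral_comb; auto. Qed.

Lemma hasint_zero : hasint (fun _ => 0).
Proof. intros f Hf. rewrite (integral_eq _ f 0); auto; apply is_integral_zero. Qed.

Lemma integral_zero f : in_B A f -> integral A (fun _ => 0) f = 0.
Proof. intros Hf. apply integral_eq; auto. apply is_integral_zero. Qed.

Lemma hasint_eqA mu nu : eqA A mu nu -> hasint mu -> hasint nu.
Proof. intros He H f Hf. rewrite <- (integral_eqA mu nu f He). apply is_integral_eqA with mu; auto. Qed.

Lemma in_B_add f g : in_B A f -> in_B A g -> in_B A (fun x => f x + g x).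
Proof.
  intros Hf Hg e He. destruct (Hf (e/2) ltac:(lra)) as [s1 [H1 B1]]. destruct (Hg (e/2) ltac:(lra)) as [s2 [H2 B2]].
  exists (s1 ++ s2). split. apply in_app; auto. intros x. rewrite eval_app.
  replace (f x + g x - (simple_eval s1 x + simple_eval s2 x)) with ((f x - simple_eval s1 x) + (g x - simple_eval s2 x)) by ring.
  eapply Rle_trans; [apply Rabs_triang|]. specialize (B1 x); specialize (B2 x); lra.
Qed.

Lemma in_B_scal c f : in_B A f -> in_B A (fun x => c * f x).
Proof.
  intros Hf e He. pose proof (Rabs_pos c).
  destruct (Hf (e / (Rabs c + 1)) ltac:(apply Rdiv_lt_0_compat; lra)) as [s [Hs B]].
  exists (smap c s). split. apply in_smap; auto. intros x. rewrite eval_smap.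
  replace (c * f x - c * simple_eval s x) with (c * (f x - simple_eval s x)) by ring.
  rewrite Rabs_mult. specialize (B x).
  assert (Rabs c * Rabs (f x - simple_eval s x) <= Rabs c * (e / (Rabs c + 1))) by (apply Rmult_le_compat_l; auto).
  assert (Rabs c * (e / (Rabs c + 1)) <= e).
  { apply Rmult_le_reg_r with (Rabs c + 1); [lra|]. field_simplify; lra. }
  lra.
Qed.

Lemma in_B_const c : in_B A (fun _ => c).
Proof.
  intros e He. exists ((c, fun _ => True) :: nil). split. constructor; [apply A_true|constructor].
  intros x. simpl. unfold indic. destruct (excluded_middle_informative True); [|tauto].
  replace (c - (c * 1 + 0)) with 0 by ring. rewrite Rabs_R0. lra.
Qed.

Lemma integral_add mu f g : is_ba A mu -> in_B A f -> in_B A g ->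
  integral A mu (fun x => f x + g x) = integral A mu f + integral A mu g.
Proof.
  intros Hba Hf Hg. destruct (ba_integral mu Hba) as [K [HK H]].
  assert (integral A mu (fun x => f x + g x) - integral A mu f - integral A mu g = 0); [|lra].
  apply small_zero. intros e He. set (d := e / (4 * K)).
  assert (Hd : 0 < d) by (unfold d; apply Rdiv_lt_0_compat; lra).
  destruct (Hf d Hd) as [s1 [H1 B1]]. destruct (Hg d Hd) as [s2 [H2 B2]].
  pose proof (H f Hf s1 d H1 (Rlt_le _ _ Hd) B1) as X1.
  pose proof (H g Hg s2 d H2 (Rlt_le _ _ Hd) B2) as X2.
  pose proof (H _ (in_B_add f g Hf Hg) (s1 ++ s2) (2 * d) (in_app _ _ H1 H2) ltac:(lra)) as X3.
  rewrite int_app in X3.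
  assert (Rabs (integral A mu (fun x => f x + g x) - (simple_int mu s1 + simple_int mu s2)) <= K * (2 * d)).
  { apply X3. intros x. rewrite eval_app.
    replace (f x + g x - (simple_eval s1 x + simple_eval s2 x)) with ((f x - simple_eval s1 x) + (g x - simple_eval s2 x)) by ring.
    eapply Rle_trans; [apply Rabs_triang|]. specialize (B1 x); specialize (B2 x); lra. }
  apply Rabs_le_inv in X1. apply Rabs_le_inv in X2. apply Rabs_le_inv in H0.
  assert (K * d = e / 4) by (unfold d; field; lra).
  apply Rabs_le. nra.
Qed.

Lemma integral_scal mu c f : is_ba A mu -> in_B A f ->
  integral A mu (fun x => c * f x) = c * integral A mu f.
Proof.
  intros Hba Hf. destruct (ba_integral mu Hba) as [K [HK H]].
  assert (integral A mu (fun x => c * f x) - c * integral A mu f = 0); [|lra].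
  apply small_zero. intros e He. pose proof (Rabs_pos c).
  set (d := e / (2 * K * (Rabs c + 1))).
  assert (Hd : 0 < d) by (unfold d; apply Rdiv_lt_0_compat; nra).
  destruct (Hf d Hd) as [s [Hs B]].
  pose proof (H f Hf s d Hs (Rlt_le _ _ Hd) B) as X1.
  pose proof (H _ (in_B_scal c f Hf) (smap c s) (Rabs c * d) (in_smap c s Hs) ltac:(nra)) as X2.
  rewrite int_smap in X2.
  assert (Rabs (integral A mu (fun x => c * f x) - c * simple_int mu s) <= K * (Rabs c * d)).
  { apply X2. intros x. rewrite eval_smap.
    replace (c * f x - c * simple_eval s x) with (c * (f x - simple_eval s x)) by ring.
    rewrite Rabs_mult. apply Rmult_le_compat_l; auto. }
  replace (integral A mu (fun x => c * f x) - c * integral A mu f) with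
    ((integral A mu (fun x => c * f x) - c * simple_int mu s) - c * (integral A mu f - simple_int mu s)) by ring.
  eapply Rle_trans; [apply Rabs_sub_le|]. rewrite Rabs_mult.
  assert (Rabs c * Rabs (integral A mu f - simple_int mu s) <= Rabs c * (K * d)) by (apply Rmult_le_compat_l; auto).
  assert (K * d * (Rabs c + 1) = e / 2) by (unfold d; field; lra).
  nra.
Qed.

Lemma integral_const mu c : is_ba A mu -> integral A mu (fun _ => c) = c * mu (fun _ => True).
Proof.
  intros Hba. destruct (ba_integral mu Hba) as [K [HK H]].
  pose proof (H _ (in_B_const c) ((c, fun _ => True) :: nil) 0) as X.
  simpl in X. assert (Rabs (integral A mu (fun _ => c) - (c * mu (fun _ => True) + 0)) <= K * 0).
  { apply X. constructor; [apply A_true|constructor]. lra. intros x. unfold indic.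
    destruct (excluded_middle_informative True); [|tauto].
    replace (c - (c * 1 + 0)) with 0 by ring. rewrite Rabs_R0. lra. }
  rewrite Rmult_0_r in H0. apply Rabs_le_inv in H0. lra.
Qed.

Lemma pba_ba mu : is_pba A mu -> is_ba A mu.
Proof.
  intros [Hfa [Hpos H1]]. split; auto. exists 1. intros E HE.
  pose proof (Hfa E (fun x => ~ E x) HE (A_compl E HE) (fun x a b => b a)). cbv beta in H.
  replace (fun x => E x \/ ~ E x) with (fun _ : Omega => True) in H by (apply setext; intros; tauto).
  pose proof (Hpos E HE). pose proof (Hpos _ (A_compl E HE)).
  rewrite Rabs_right; lra.
Qed.

Definition combo (l : list (R * setfun Omega)) : setfun Omega :=
  fun E => fold_right (fun p acc => fst p * snd p E + acc) 0 l.

Lemma combo_pba l mu : Forall (fun p => 0 <= fst p /\ is_pba A (snd p)) l ->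
  fold_right (fun p acc => fst p + acc) 0 l = 1 -> eqA A mu (combo l) -> is_pba A mu.
Proof.
  intros Hl Hs He.
  assert (Hfa : fin_additive A (combo l)).
  { intros E G HE HG D. unfold combo. clear Hs He. induction Hl as [|[c nu] l' [Hc [Hnu _]] Hl' IH]; simpl; [ring|].
    rewrite IH. rewrite Hnu; auto. simpl. ring. }
  assert (Hpos : forall E, A E -> 0 <= combo l E).
  { intros E HE. unfold combo. clear Hs He Hfa. induction Hl as [|[c nu] l' [Hc [_ [Hnu _]]] Hl' IH]; simpl; [lra|].
    pose proof (Hnu E HE). simpl in *. nra. }
  assert (Htot : combo l (fun _ => True) = fold_right (fun p acc => fst p + acc) 0 l).
  { unfold combo. clear Hs He Hfa Hpos. induction Hl as [|[c nu] l' [Hc [_ [_ Hnu]]] Hl' IH]; simpl; [lra|].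
    simpl in Hnu. rewrite IH, Hnu. ring. }
  split; [|split].
  - intros E G HE HG D. rewrite !He; auto. apply A_union; auto.
  - intros E HE. rewrite He; auto.
  - rewrite He by apply A_true. rewrite Htot. auto.
Qed.

End Int.


Definition gsum {T : Type} (l : list T) (F : T -> R) : R := fold_right (fun e acc => F e + acc) 0 l.

Section Gsum.
Variable T : Type.
Implicit Types (l : list T) (F G : T -> R).

Lemma gsum_add l F G : gsum l (fun e => F e + G e) = gsum l F + gsum l G.
Proof. induction l; simpl; [ring|]. rewrite IHl. ring. Qed.
Lemma gsum_scal l c F : gsum l (fun e => c * F e) = c * gsum l F.
Proof. induction l; simpl; [ring|]. rewrite IHl. ring. Qed.
Lemma gsum_ext_in l F G : (forall e, In e l -> F e = G e) -> gsum l F = gsum l G.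
Proof. induction l; simpl; intros H; auto. rewrite H, IHl; auto. Qed.
Lemma gsum_le_in l F G : (forall e, In e l -> F e <= G e) -> gsum l F <= gsum l G.
Proof. induction l; simpl; intros H; [lra|]. pose proof (H a (or_introl eq_refl)). pose proof (IHl (fun e He => H e (or_intror He))). lra. Qed.
Lemma gsum_const l c : gsum l (fun _ => c) = INR (length l) * c.
Proof. induction l; simpl gsum; simpl length; [simpl; ring|]. rewrite IHl, S_INR. ring. Qed.
Lemma gsum_app l1 l2 F : gsum (l1 ++ l2) F = gsum l1 F + gsum l2 F.
Proof. induction l1; simpl; [ring|]. rewrite IHl1. ring. Qed.
Lemma gsum_nonneg l F : (forall e, In e l -> 0 <= F e) -> 0 <= gsum l F.
Proof. intros H. pose proof (gsum_le_in l (fun _ => 0) F H). rewrite gsum_const in H0. lra. Qed.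
Lemma gsum_nonneg_zero l F : (forall e, In e l -> 0 <= F e) -> gsum l F = 0 -> forall e, In e l -> F e = 0.
Proof.
  induction l; simpl; intros H Hs e He; [tauto|].
  assert (0 <= gsum l F) by (apply gsum_nonneg; auto).
  pose proof (H a (or_introl eq_refl)).
  destruct He as [<-|He]; [lra|]. apply IHl; auto. lra.
Qed.
Lemma gsum_abs l F c : (forall e, In e l -> Rabs (F e) <= c) -> Rabs (gsum l F) <= INR (length l) * c.
Proof.
  induction l; simpl gsum; simpl length; intros H. simpl; rewrite Rabs_R0; lra.
  rewrite S_INR. eapply Rle_trans; [apply Rabs_triang|].
  pose proof (H a (or_introl eq_refl)). pose proof (IHl (fun e He => H e (or_intror He))). lra.
Qed.

Definition filt (x : T) (l : list T) :=
  filter (fun j => if excluded_middle_informative (j = x) then false else true) l.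

Lemma In_filt x l j : In j (filt x l) <-> In j l /\ j <> x.
Proof.
  unfold filt. rewrite filter_In. destruct (excluded_middle_informative (j = x)); split; intros [H1 H2]; auto; try discriminate; tauto.
Qed.
Lemma NoDup_filt x l : NoDup l -> NoDup (filt x l).
Proof. intros H. apply NoDup_filter. auto. Qed.
Lemma filt_notin x l : ~ In x l -> filt x l = l.
Proof.
  induction l; simpl; intros H; auto. unfold filt; simpl.
  destruct (excluded_middle_informative (a = x)). subst; tauto. f_equal. apply IHl. tauto.
Qed.
Lemma gsum_split l x F : NoDup l -> In x l -> gsum l F = F x + gsum (filt x l) F.
Proof.
  induction l as [|a l IH]; intros Hn Hx; [destruct Hx|]. inversion Hn; subst.
  unfold filt; simpl. destruct (excluded_middle_informative (a = x)).
  - subst. fold (filt x l). rewrite filt_notin; auto.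
  - fold (filt x l). simpl. destruct Hx as [->|Hx]; [tauto|]. rewrite IH; auto. ring.
Qed.
Lemma gsum_indicator l x0 c : NoDup l -> In x0 l ->
  gsum l (fun j => if excluded_middle_informative (x0 = j) then c else 0) = c.
Proof.
  intros Hn Hx. rewrite (gsum_split l x0) by auto.
  destruct (excluded_middle_informative (x0 = x0)); [|tauto].
  rewrite (gsum_ext_in _ _ (fun _ => 0)). rewrite gsum_const. ring.
  intros e0 He. apply In_filt in He. destruct (excluded_middle_informative (x0 = e0)); auto. subst; tauto.
Qed.
Lemma gsum_center l F : gsum l (fun j => F j - gsum l F / INR (length l)) = 0.
Proof.
  replace (fun j => F j - gsum l F / INR (length l)) with (fun j => F j + (- (gsum l F / INR (length l)))) by
    (apply functional_extensionality; intros; ring).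
  rewrite gsum_add, gsum_const. destruct l as [|a l]. simpl. ring.
  assert (0 < INR (length (a :: l))) by (apply lt_0_INR; simpl; lia). field. lra.
Qed.
End Gsum.
Arguments filt {T}.

Definition Sup (S : R -> Prop) : R := - Inf (fun z => S (- z)).
Lemma Sup_spec (S : R -> Prop) (b : R) : (exists z, S z) -> (forall z, S z -> z <= b) ->
  (forall z, S z -> z <= Sup S) /\ (forall m', (forall z, S z -> z <= m') -> Sup S <= m').
Proof.
  intros [z0 H0] Hb. destruct (Inf_spec (fun z => S (- z)) (- b)) as [H1 H2].
  - exists (- z0). rewrite Ropp_involutive. auto.
  - intros z Hz. specialize (Hb _ Hz). lra.
  - unfold Sup. split.
    + intros z Hz. assert (Inf (fun z => S (- z)) <= - z) by (apply H1; rewrite Ropp_involutive; auto). lra.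
    + intros m' Hm. assert (- m' <= Inf (fun z => S (- z))) by (apply H2; intros z Hz; specialize (Hm _ Hz); lra). lra.
Qed.

Fixpoint normn (n : nat) (z : vec) : R :=
  match n with O => 0 | S m => Rmax (normn m z) (Rabs (z m)) end.

Lemma normn_nonneg n z : 0 <= normn n z.
Proof. induction n; simpl; [lra|]. eapply Rle_trans; [apply IHn|apply Rmax_l]. Qed.
Lemma normn_ge n z k : (k < n)%nat -> Rabs (z k) <= normn n z.
Proof.
  induction n; intros Hk; [lia|]. simpl. destruct (Nat.eq_dec k n) as [->|Hne].
  apply Rmax_r. eapply Rle_trans; [apply IHn; lia|apply Rmax_l].
Qed.
Lemma normn_lub n z c : 0 <= c -> (forall k, (k < n)%nat -> Rabs (z k) <= c) -> normn n z <= c.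
Proof. induction n; simpl; intros Hc H; auto. apply Rmax_lub; auto. Qed.
Lemma normn_triang n x y : normn n (vadd x y) <= normn n x + normn n y.
Proof.
  apply normn_lub. pose proof (normn_nonneg n x); pose proof (normn_nonneg n y); lra.
  intros k Hk. unfold vadd. eapply Rle_trans; [apply Rabs_triang|].
  pose proof (normn_ge n x k Hk); pose proof (normn_ge n y k Hk); lra.
Qed.
Lemma normn_scal n s x : 0 <= s -> normn n (vscal s x) = s * normn n x.
Proof.
  intros Hs. induction n; simpl; [ring|]. rewrite IHn. unfold vscal. rewrite Rabs_mult, Rabs_pos_eq by auto.
  destruct (Rle_dec (normn n x) (Rabs (x n))).
  rewrite !Rmax_right; auto; apply Rmult_le_compat_l; auto.
  rewrite !Rmax_left; auto; try lra; apply Rmult_le_compat_l; auto; lra.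
Qed.
Lemma normn_dep n x y : (forall k, (k < n)%nat -> x k = y k) -> normn n x = normn n y.
Proof. induction n; simpl; intros H; auto. rewrite IHn, H; auto. Qed.

Lemma dot_ext_x n l x y : (forall k, (k < n)%nat -> l k * x k = l k * y k) -> dot n l x = dot n l y.
Proof. induction n; simpl; intros H; auto. rewrite IHn, H; auto. Qed.


Section Main.
Variables (N Omega : Type) (A : (Omega -> Prop) -> Prop) (M : N -> (Omega -> Prop) -> Prop)
  (t : N -> Omega -> setfun Omega).
Hypothesis HT : is_type_space A M t.

Lemma HA : is_field A.
Proof. apply HT. Qed.
Lemma tpba i w : is_pba A (t i w).
Proof. destruct HT as [_ [_ [_ [H _]]]]. apply H. Qed.
Lemma tba i w : is_ba A (t i w).
Proof. apply pba_ba. apply HA. apply tpba. Qed.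
Lemma thas i w : hasint Omega A (t i w).
Proof. apply ba_hasint. apply HA. apply tba. Qed.

Lemma scal_mu mu a f : hasint Omega A mu -> in_B A f ->
  hasint Omega A (fun E => a * mu E) /\ integral A (fun E => a * mu E) f = a * integral A mu f.
Proof.
  intros Hm Hf. assert (He : eqA A (fun E => a * mu E + 0 * mu E) (fun E => a * mu E)) by (intros E _; ring).
  split. apply hasint_eqA with (fun E => a * mu E + 0 * mu E); auto. apply hasint_comb; auto.
  rewrite <- (integral_eqA _ _ _ _ f He). rewrite integral_comb; auto. ring.
Qed.

Lemma hasint_scal mu a : hasint Omega A mu -> hasint Omega A (fun E => a * mu E).
Proof.
  intros Hm. assert (He : eqA A (fun E => a * mu E + 0 * mu E) (fun E => a * mu E)) by (intros E _; ring).
  apply hasint_eqA with (fun E => a * mu E + 0 * mu E); auto. apply hasint_comb; auto.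
Qed.

Lemma sub_mu mu nu f : hasint Omega A mu -> hasint Omega A nu -> in_B A f ->
  hasint Omega A (fun E => mu E - nu E) /\ integral A (fun E => mu E - nu E) f = integral A mu f - integral A nu f.
Proof.
  intros Hm Hn Hf. assert (He : eqA A (fun E => 1 * mu E + (-1) * nu E) (fun E => mu E - nu E)) by (intros E _; ring).
  split. apply hasint_eqA with (fun E => 1 * mu E + (-1) * nu E); auto. apply hasint_comb; auto.
  rewrite <- (integral_eqA _ _ _ _ f He). rewrite integral_comb; auto. ring.
Qed.

Lemma combo_int l f : Forall (fun p => is_pba A (snd p)) l -> in_B A f ->
  hasint Omega A (combo Omega l) /\ integral A (combo Omega l) f = gsum l (fun p => fst p * integral A (snd p) f).
Proof.
  induction l as [|[c nu] l IH]; intros Hl Hf.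
  - split. apply hasint_zero. simpl. apply integral_zero; auto.
  - inversion Hl; subst. simpl in H1. destruct (IH H2 Hf) as [H3 H4].
    assert (He : eqA A (fun E => c * nu E + 1 * combo Omega l E) (combo Omega ((c, nu) :: l)))
      by (intros E _; unfold combo; simpl; ring).
    assert (Hnu : hasint Omega A nu) by (apply ba_hasint; [apply HA|apply pba_ba; auto; apply HA]).
    split. apply hasint_eqA with (fun E => c * nu E + 1 * combo Omega l E); auto. apply hasint_comb; auto.
    rewrite <- (integral_eqA _ _ _ _ f He). rewrite integral_comb; auto. rewrite H4. simpl. ring.
Qed.

Lemma conv_pba S mu : (forall nu, S nu -> is_pba A nu) -> conv A S mu -> is_pba A mu.
Proof.
  intros HS [l [Hl [Hs He]]]. apply combo_pba with l; auto. apply HA.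
  eapply Forall_impl; [|exact Hl]. intros [c nu] [Hc Hnu]; split; auto.
Qed.

Lemma conv_int S mu f : (forall nu, S nu -> is_pba A nu) -> in_B A f -> conv A S mu ->
  exists l, Forall (fun p => 0 <= fst p /\ S (snd p)) l /\
    integral A mu f = gsum l (fun p => fst p * integral A (snd p) f).
Proof.
  intros HS Hf [l [Hl [Hs He]]]. exists l. split; auto.
  rewrite (integral_eqA _ _ _ _ f He). apply combo_int; auto.
  eapply Forall_impl; [|exact Hl]. intros [c nu] [Hc Hnu]; auto.
Qed.

Lemma nonneg_closure S f mu : (forall nu, S nu -> is_pba A nu) -> in_B A f ->
  (forall nu, S nu -> 0 <= integral A nu f) -> wclosure A (conv A S) mu -> 0 <= integral A mu f.
Proof.
  intros HS Hf Hpos [Hba Hcl]. apply Rnot_lt_le. intros Hneg.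
  destruct (Hcl (f :: nil) (- integral A mu f / 2) ltac:(lra) ltac:(repeat constructor; auto)) as [y [Hy Hfor]].
  inversion Hfor; subst.
  destruct (conv_int S y f HS Hf Hy) as [l [Hl Hi]].
  assert (0 <= integral A y f).
  { rewrite Hi. apply gsum_nonneg. intros [c nu] Hin. rewrite Forall_forall in Hl.
    destruct (Hl _ Hin) as [Hc Hnu]. simpl in *. apply Rmult_le_pos; auto. }
  unfold Rabs in H1. destruct (Rcase_abs _) in H1; lra.
Qed.

Lemma integral_gsum mu (l : list N) (F : N -> Omega -> R) : is_ba A mu -> (forall j, In j l -> in_B A (F j)) ->
  in_B A (fun w => gsum l (fun j => F j w)) /\
  integral A mu (fun w => gsum l (fun j => F j w)) = gsum l (fun j => integral A mu (F j)).
Proof.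
  intros Hba. induction l as [|a l IH]; intros HB.
  - simpl. split. apply in_B_const; apply HA. rewrite integral_const; auto. ring. apply HA.
  - destruct IH as [IH1 IH2]. intros; apply HB; simpl; auto.
    assert (Ha : in_B A (F a)) by (apply HB; simpl; auto).
    simpl. split. apply (in_B_add _ _ (F a) (fun w => gsum l (fun j => F j w))); auto.
    rewrite (integral_add _ _ HA mu (F a) (fun w => gsum l (fun j => F j w))); auto. rewrite IH2. reflexivity.
Qed.

Lemma bet_not_sc : (exists I f, acceptable_bet A t I f) -> ~ strongly_consistent A t.
Proof.
  intros [I [f [[HnD [HfB Hsum]] [Hcc [ws [is [HisI Hpos]]]]]]] HSC.
  assert (Hacc : forall w i, In i I -> 0 <= integral A (t i w) (f i)).
  { intros w i Hi. destruct (Hcc w) as [S [_ [Sw Sub]]]. apply (Sub w Sw i Hi). }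
  set (rho := integral A (t is ws) (f is)) in *.
  set (Jl := filt is I).
  assert (HJl : forall j, In j Jl <-> In j I /\ j <> is) by (intros; apply In_filt).
  assert (Hsumf : forall w, gsum Jl (fun j => f j w) = -1 * f is w).
  { intros w. specialize (Hsum w). change (gsum I (fun i => f i w) = 0) in Hsum.
    rewrite (gsum_split _ I is) in Hsum by auto. fold Jl in Hsum. lra. }
  assert (HBJ : forall j, In j Jl -> in_B A (f j)) by (intros j Hj; apply HfB; apply HJl; auto).
  assert (Hsumint : forall mu, is_ba A mu -> gsum Jl (fun j => integral A mu (f j)) = - integral A mu (f is)).
  { intros mu Hmu. destruct (integral_gsum mu Jl f Hmu HBJ) as [_ H].
    rewrite <- H. replace (fun w => gsum Jl (fun j => f j w)) with (fun w => -1 * f is w)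
      by (apply functional_extensionality; intros; rewrite Hsumf; auto).
    rewrite integral_scal; auto. ring. apply HA. }
  specialize (HSC I HnD is HisI ws). cbv zeta in HSC. destruct HSC as [_ Hcl].
  set (len := INR (length Jl)). assert (Hlen : 0 <= len) by apply pos_INR.
  set (eps := rho / (2 * (len + 1))).
  assert (Heps : 0 < eps) by (unfold eps; apply Rdiv_lt_0_compat; lra).
  destruct (Hcl (map (fun j => (j, f j)) Jl) eps Heps) as [y [Hy Hfor]].
  { rewrite Forall_forall. intros p Hp. apply in_map_iff in Hp as [j [<- Hj]]. simpl.
    split. apply HJl; auto. apply HBJ; auto. }
  rewrite Forall_forall in Hfor.
  assert (Hclose : forall j, In j Jl -> Rabs (integral A (t is ws) (f j) - integral A (y j) (f j)) < eps).
  { intros j Hj. apply (Hfor (j, f j)). apply in_map_iff. exists j; auto. }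
  destruct Hy as [u [z [Hu [Hz ->]]]].
  assert (C1 : forall j, In j Jl -> hasint Omega A (u j) /\ 0 <= integral A (u j) (f j)).
  { intros j Hj. destruct Hu as [->|[b [y' [Hb [Hy' ->]]]]].
    - split. apply hasint_zero. rewrite integral_zero; auto. lra.
    - assert (HJ : In j I /\ j <> is) by (apply HJl; auto).
      specialize (Hy' j HJ). 
      assert (Hh : hasint Omega A (y' j)) by (apply ba_hasint; [apply HA|apply Hy']).
      destruct (scal_mu (y' j) b (f j) Hh (HBJ j Hj)) as [H1 H2]. split; auto. rewrite H2.
      apply Rmult_le_pos; auto. apply nonneg_closure with (S := fun nu => exists w, nu = t j w); auto.
      + intros nu [w ->]. apply tpba.
      + intros nu [w ->]. apply Hacc. apply HJ. }
  assert (C2 : (forall j, In j Jl -> hasint Omega A (z j)) /\ gsum Jl (fun j => integral A (z j) (f j)) <= 0).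
  { destruct Hz as [->|[g [z' [Hg [[zeta [Hzeta Hz']] ->]]]]].
    - split. intros; apply hasint_zero. rewrite (gsum_ext_in _ _ _ (fun _ => 0)). rewrite gsum_const. lra.
      intros j Hj. apply integral_zero; auto.
    - assert (Hzb : is_ba A zeta) by apply Hzeta.
      assert (Hzh : hasint Omega A zeta) by (apply ba_hasint; auto; apply HA).
      split.
      + intros j Hj. rewrite Hz' by (apply HJl; auto). apply hasint_scal; auto.
      + rewrite (gsum_ext_in _ _ _ (fun j => g * integral A zeta (f j))).
        * rewrite gsum_scal, Hsumint by auto.
          assert (0 <= integral A zeta (f is)).
          { apply (nonneg_closure (fun nu => exists w, nu = t is w /\ ~ eqA A (t is w) (t is ws))).
            - intros nu [w [-> _]]. apply tpba.
            - apply HfB; auto.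
            - intros nu [w [-> _]]. apply Hacc; auto.
            - exact Hzeta. }
          nra.
        * intros j Hj. rewrite Hz' by (apply HJl; auto). apply scal_mu; auto. }
  destruct C2 as [C2a C2b].
  assert (Hdiff : gsum Jl (fun j => integral A (t is ws) (f j) - integral A (fun E => u j E - z j E) (f j))
                  <= - rho).
  { rewrite (gsum_ext_in _ _ _ (fun j => integral A (t is ws) (f j) + (- integral A (u j) (f j) + integral A (z j) (f j)))).
    rewrite !gsum_add. rewrite Hsumint by apply tba. fold rho.
    assert (gsum Jl (fun j => - integral A (u j) (f j)) <= 0).
    { rewrite (gsum_ext_in _ _ _ (fun j => -1 * integral A (u j) (f j))) by (intros; ring).
      rewrite gsum_scal. pose proof (gsum_nonneg _ Jl (fun j => integral A (u j) (f j)) (fun j Hj => proj2 (C1 j Hj))). lra. }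
    lra.
    intros j Hj. destruct (sub_mu (u j) (z j) (f j) (proj1 (C1 j Hj)) (C2a j Hj) (HBJ j Hj)) as [_ ->]. ring. }
  pose proof (gsum_abs _ Jl _ eps (fun j Hj => Rlt_le _ _ (Hclose j Hj))) as Habs.
  fold len in Habs.
  assert (len * eps < rho).
  { unfold eps. apply Rmult_lt_reg_r with (2 * (len + 1)); [lra|].
    replace (len * (rho / (2 * (len + 1))) * (2 * (len + 1))) with (len * rho) by (field; lra). nra. }
  apply Rabs_le_inv in Habs. lra.
Qed.

Lemma gsum_map {T U : Type} (L : list T) (h : T -> U) (F : U -> R) : gsum (map h L) F = gsum L (fun e => F (h e)).
Proof. induction L; simpl; auto. rewrite IHL. reflexivity. Qed.

Lemma wsum_map {T : Type} (L : list T) (h : T -> R * setfun Omega) :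
  fold_right (fun p acc => fst p + acc) 0 (map h L) = gsum L (fun e => fst (h e)).
Proof. induction L; simpl; auto. rewrite IHL. reflexivity. Qed.

Lemma conv_wclosure S mu : (forall nu, S nu -> is_pba A nu) -> conv A S mu -> wclosure A (conv A S) mu.
Proof.
  intros HS Hc. split. apply pba_ba. apply HA. apply (conv_pba S); auto.
  intros fs e He _. exists mu. split; auto. rewrite Forall_forall. intros x _.
  rewrite Rminus_diag, Rabs_R0. auto.
Qed.

Lemma zero_combo {T : Type} (L : list (R * T)) (X : T -> R) : Forall (fun e => 0 <= fst e) L ->
  gsum L (fun e => fst e) = 0 -> gsum L (fun e => fst e * X (snd e)) = 0.
Proof.
  intros Hn Hz. rewrite Forall_forall in Hn.
  rewrite (gsum_ext_in _ _ _ (fun _ => 0)). rewrite gsum_const. ring.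
  intros e He. rewrite (gsum_nonneg_zero _ L (fun e => fst e) Hn Hz e He). ring.
Qed.

Lemma cone_combo {T : Type} (L : list (R * T)) (G : T -> setfun Omega) (S : setfun Omega -> Prop) :
  Forall (fun e => 0 <= fst e) L -> (forall e, In e L -> S (G (snd e))) -> (forall nu, S nu -> is_pba A nu) ->
  0 < gsum L (fun e => fst e) ->
  wclosure A (conv A S) (combo Omega (map (fun e => (fst e / gsum L (fun e => fst e), G (snd e))) L)) /\
  hasint Omega A (combo Omega (map (fun e => (fst e / gsum L (fun e => fst e), G (snd e))) L)) /\
  forall g, in_B A g ->
    gsum L (fun e => fst e) * integral A (combo Omega (map (fun e => (fst e / gsum L (fun e => fst e), G (snd e))) L)) g
    = gsum L (fun e => fst e * integral A (G (snd e)) g).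
Proof.
  intros Hn HSL HS HB. set (B := gsum L (fun e => fst e)) in *.
  rewrite Forall_forall in Hn.
  assert (Hpb : Forall (fun p => is_pba A (snd p)) (map (fun e => (fst e / B, G (snd e))) L)).
  { rewrite Forall_forall. intros p Hp. apply in_map_iff in Hp as [e [<- He]]. simpl. apply HS, HSL; auto. }
  assert (Hcv : conv A S (combo Omega (map (fun e => (fst e / B, G (snd e))) L))).
  { exists (map (fun e => (fst e / B, G (snd e))) L). split; [|split].
    - rewrite Forall_forall. intros p Hp. apply in_map_iff in Hp as [e [<- He]]. simpl. split.
      unfold Rdiv; apply Rmult_le_pos; auto; left; apply Rinv_0_lt_compat; auto. apply HSL; auto.
    - rewrite wsum_map. simpl. rewrite (gsum_ext_in _ _ _ (fun e => / B * fst e)) by (intros; unfold Rdiv; ring).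
      rewrite gsum_scal. change (gsum L fst) with B. field. lra.
    - intros E _. reflexivity. }
  split; [|split].
  - apply conv_wclosure; auto.
  - destruct (combo_int _ (fun _ => 0) Hpb) as [H _]; auto. apply in_B_const, HA.
  - intros g Hg. destruct (combo_int _ g Hpb Hg) as [_ ->]. rewrite gsum_map. simpl.
    rewrite <- gsum_scal. apply gsum_ext_in. intros e _. field. lra.
Qed.

Lemma in_B_dot (gk : nat -> Omega -> R) c m : (forall k, (k < m)%nat -> in_B A (gk k)) ->
  in_B A (fun w => dot m c (fun k => gk k w)).
Proof.
  induction m; intros H; simpl. apply in_B_const, HA.
  apply (in_B_add _ _ (fun w => dot m c (fun k => gk k w)) (fun w => c m * gk m w)).
  apply IHm; intros; apply H; lia. apply in_B_scal; apply H; lia.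
Qed.

Lemma integral_dot mu (gk : nat -> Omega -> R) c m : is_ba A mu -> (forall k, (k < m)%nat -> in_B A (gk k)) ->
  integral A mu (fun w => dot m c (fun k => gk k w)) = dot m c (fun k => integral A mu (gk k)).
Proof.
  intros Hba. induction m; intros H; simpl. rewrite integral_const; auto. ring. apply HA.
  assert (H1 : in_B A (fun w => dot m c (fun k => gk k w))) by (apply in_B_dot; intros; apply H; lia).
  assert (H2 : in_B A (gk m)) by (apply H; lia).
  rewrite (integral_add _ _ HA mu _ (fun w => c m * gk m w) Hba H1 (in_B_scal _ _ (c m) _ H2)).
  rewrite (integral_scal _ _ HA mu (c m) (gk m) Hba H2). rewrite IHm by (intros; apply H; lia). reflexivity.
Qed.

Lemma in_B_sub_const g c : in_B A g -> in_B A (fun w => g w - c).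
Proof.
  intros Hg. replace (fun w => g w - c) with (fun w => g w + (fun _ => - c) w) by (apply functional_extensionality; intros; simpl; ring).
  apply in_B_add; auto. apply in_B_const, HA.
Qed.

Lemma in_B_const_sub g c : in_B A g -> in_B A (fun w => c - g w).
Proof.
  intros Hg. replace (fun w => c - g w) with (fun w => (fun _ => c) w + -1 * g w) by (apply functional_extensionality; intros; simpl; ring).
  apply in_B_add. apply in_B_const, HA. apply in_B_scal; auto.
Qed.

Lemma integral_sub_const mu g c : is_pba A mu -> in_B A g -> integral A mu (fun w => g w - c) = integral A mu g - c.
Proof.
  intros Hp Hg. assert (Hba : is_ba A mu) by (apply pba_ba; auto; apply HA).
  replace (fun w => g w - c) with (fun w => g w + (fun _ => - c) w) by (apply functional_extensionality; intros; simpl; ring).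
  rewrite integral_add; auto. rewrite integral_const; auto. destruct Hp as [_ [_ ->]]. ring. apply HA. apply HA. apply in_B_const, HA.
Qed.

Lemma integral_const_sub mu g c : is_pba A mu -> in_B A g -> integral A mu (fun w => c - g w) = c - integral A mu g.
Proof.
  intros Hp Hg. assert (Hba : is_ba A mu) by (apply pba_ba; auto; apply HA).
  replace (fun w => c - g w) with (fun w => (fun _ => c) w + -1 * g w) by (apply functional_extensionality; intros; simpl; ring).
  rewrite integral_add; auto. rewrite integral_const, integral_scal; auto. destruct Hp as [_ [_ ->]]. ring. apply HA. apply HA. apply HA.
  apply in_B_const, HA. apply in_B_scal; auto.
Qed.

Lemma build_y (I : list N) (is : N) (ws : Omega) (L1 : list (R * (N -> Omega))) (L2 : list (R * Omega)) :
  Forall (fun e => 0 <= fst e) L1 -> Forall (fun e => 0 <= fst e /\ ~ eqA A (t is (snd e)) (t is ws)) L2 ->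
  exists y, setdiff (cone (prodJ (fun i => In i I /\ i <> is) (Pi A t)))
                    (cone (diagJ (fun i => In i I /\ i <> is) (Pi_minus A t is ws))) y /\
  forall j g, In j I /\ j <> is -> in_B A g ->
   integral A (y j) g = gsum L1 (fun e => fst e * integral A (t j (snd e j)) g)
                        - gsum L2 (fun e => fst e * integral A (t is (snd e)) g).
Proof.
  intros H1 H2.
  assert (H2' : Forall (fun e => 0 <= fst e) L2) by (eapply Forall_impl; [|exact H2]; intros e [? _]; auto).
  assert (Hu : exists u, cone (prodJ (fun i => In i I /\ i <> is) (Pi A t)) u /\
     forall j, In j I /\ j <> is -> hasint Omega A (u j) /\
       forall g, in_B A g -> integral A (u j) g = gsum L1 (fun e => fst e * integral A (t j (snd e j)) g)).
  { destruct (Req_dec (gsum L1 (fun e => fst e)) 0) as [Hz|Hnz].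
    - exists (fun _ _ => 0). split. left; reflexivity. intros j _. split. apply hasint_zero.
      intros g Hg. rewrite integral_zero; auto. symmetry. apply (zero_combo L1 (fun W => integral A (t j (W j)) g)); auto.
    - assert (HB : 0 < gsum L1 (fun e => fst e)).
      { assert (0 <= gsum L1 (fun e => fst e)) by (apply gsum_nonneg; rewrite Forall_forall in H1; auto). lra. }
      exists (fun j E => gsum L1 (fun e => fst e) *
         combo Omega (map (fun e => (fst e / gsum L1 (fun e => fst e), (fun W => t j (W j)) (snd e))) L1) E).
      assert (Hcc : forall j, wclosure A (conv A (fun nu => exists w, nu = t j w))
           (combo Omega (map (fun e => (fst e / gsum L1 (fun e => fst e), (fun W => t j (W j)) (snd e))) L1)) /\
          hasint Omega A (combo Omega (map (fun e => (fst e / gsum L1 (fun e => fst e), (fun W => t j (W j)) (snd e))) L1)) /\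
          forall g, in_B A g ->
           gsum L1 (fun e => fst e) * integral A (combo Omega (map (fun e => (fst e / gsum L1 (fun e => fst e), (fun W => t j (W j)) (snd e))) L1)) g
           = gsum L1 (fun e => fst e * integral A ((fun W => t j (W j)) (snd e)) g)).
      { intros j. refine (cone_combo L1 (fun W => t j (W j)) (fun nu => exists w, nu = t j w) H1 _ _ HB).
        intros e _. exists (snd e j). reflexivity. intros nu [w ->]. apply tpba. }
      split.
      + right. exists (gsum L1 (fun e => fst e)). eexists. split; [lra|]. split; [|reflexivity]. intros j Hj. apply (Hcc j).
      + intros j Hj. destruct (Hcc j) as [_ [Hh Hi]]. split. apply hasint_scal; auto.
        intros g Hg. destruct (scal_mu _ (gsum L1 (fun e => fst e)) g Hh Hg) as [_ ->]. apply Hi; auto. }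
  assert (Hz : exists z, cone (diagJ (fun i => In i I /\ i <> is) (Pi_minus A t is ws)) z /\
     forall j, In j I /\ j <> is -> hasint Omega A (z j) /\
       forall g, in_B A g -> integral A (z j) g = gsum L2 (fun e => fst e * integral A (t is (snd e)) g)).
  { destruct (Req_dec (gsum L2 (fun e => fst e)) 0) as [Hz|Hnz].
    - exists (fun _ _ => 0). split. left; reflexivity. intros j _. split. apply hasint_zero.
      intros g Hg. rewrite integral_zero; auto. symmetry. apply (zero_combo L2 (fun w => integral A (t is w) g)); auto.
    - assert (HB : 0 < gsum L2 (fun e => fst e)).
      { assert (0 <= gsum L2 (fun e => fst e)) by (apply gsum_nonneg; rewrite Forall_forall in H2'; auto). lra. }
      destruct (cone_combo L2 (fun w => t is w) (fun nu => exists w, nu = t is w /\ ~ eqA A (t is w) (t is ws)))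
        as [Hc [Hh Hi]]; auto.
      { intros e He. exists (snd e). split; auto. rewrite Forall_forall in H2. apply H2; auto. }
      { intros nu [w [-> _]]. apply tpba. }
      exists (fun j E => gsum L2 (fun e => fst e) *
         combo Omega (map (fun e => (fst e / gsum L2 (fun e => fst e), (fun w => t is w) (snd e))) L2) E).
      split.
      + right. exists (gsum L2 (fun e => fst e)). eexists. split; [lra|]. split; [|reflexivity].
        eexists. split; [exact Hc|]. intros; reflexivity.
      + intros j Hj. split. apply hasint_scal; auto.
        intros g Hg. destruct (scal_mu _ (gsum L2 (fun e => fst e)) g Hh Hg) as [_ ->]. apply Hi; auto. }
  destruct Hu as [u [Hu Hu']]. destruct Hz as [z [Hz Hz']].
  exists (fun j E => u j E - z j E). split. exists u, z. auto.
  intros j g Hj Hg. destruct (sub_mu (u j) (z j) g (proj1 (Hu' j Hj)) (proj1 (Hz' j Hj)) Hg) as [_ ->].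
  rewrite (proj2 (Hu' j Hj) g Hg), (proj2 (Hz' j Hj) g Hg). reflexivity.
Qed.

Lemma sc_or_bet : ~ strongly_consistent A t -> exists I f, acceptable_bet A t I f.
Proof.
  intros HnSC. unfold strongly_consistent in HnSC.
  apply not_all_ex_not in HnSC as [I HnSC].
  apply imply_to_and in HnSC as [HnD HnSC].
  apply not_all_ex_not in HnSC as [is HnSC].
  apply imply_to_and in HnSC as [HisI HnSC].
  apply not_all_ex_not in HnSC as [ws HnSC].
  cbv zeta in HnSC. unfold wclosureJ in HnSC.
  apply not_and_or in HnSC as [Hc|Hc]. { exfalso; apply Hc; intros; apply tba. }
  apply not_all_ex_not in Hc as [fs Hc]. apply not_all_ex_not in Hc as [eps Hc].
  apply imply_to_and in Hc as [Heps Hc]. apply imply_to_and in Hc as [Hfs Hc].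
  pose (ts := t is ws).
  pose (n := length fs). pose (d0 := (is, fun _ : Omega => 0)).
  pose (jk := fun k => fst (nth k fs d0)). pose (gk := fun k => snd (nth k fs d0)).
  assert (Hk : forall k, (k < n)%nat -> (In (jk k) I /\ jk k <> is) /\ in_B A (gk k)).
  { intros k Hkn. rewrite Forall_forall in Hfs. apply Hfs. apply nth_In. auto. }
  pose (Phi := fun k mu => integral A mu (gk k)).
  pose (a := fun k => Phi k ts).
  pose (Kset := fun kap : vec => exists (L1 : list (R * (N -> Omega))) (L2 : list (R * Omega)),
     Forall (fun e => 0 <= fst e) L1 /\
     Forall (fun e => 0 <= fst e /\ ~ eqA A (t is (snd e)) (t is ws)) L2 /\
     forall k, (k < n)%nat -> kap k = gsum L1 (fun e => fst e * Phi k (t (jk k) (snd e (jk k))))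
                                  - gsum L2 (fun e => fst e * Phi k (t is (snd e)))).
  assert (Kfar : forall kap, Kset kap -> eps <= normn n (vadd a (vscal (-1) kap))).
  { intros kap [L1 [L2 [H1 [H2 H3]]]].
    destruct (build_y I is ws L1 L2 H1 H2) as [y [Hy Hyi]].
    assert (Hnf : ~ Forall (fun p => Rabs (integral A ts (snd p) - integral A (y (fst p)) (snd p)) < eps) fs).
    { intros HF. apply Hc. exists y. split; auto. }
    rewrite Forall_forall in Hnf. apply not_all_ex_not in Hnf as [p Hp]. apply imply_to_and in Hp as [Hpin Hp].
    destruct (In_nth fs p d0 Hpin) as [k [Hkn Hkp]].
    apply Rnot_lt_le in Hp. subst p.
    change (eps <= Rabs (integral A ts (gk k) - integral A (y (jk k)) (gk k))) in Hp.
    eapply Rle_trans; [|apply (normn_ge _ _ k Hkn)].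
    rewrite Hyi in Hp by (apply Hk; auto).
    assert (E : vadd a (vscal (-1) kap) k = integral A ts (gk k) -
        (gsum L1 (fun e => fst e * integral A (t (jk k) (snd e (jk k))) (gk k)) -
         gsum L2 (fun e => fst e * integral A (t is (snd e)) (gk k)))).
    { unfold vadd, vscal. rewrite H3 by auto. unfold a, Phi. ring. }
    rewrite E. exact Hp. }
  assert (Kzero : Kset vzero).
  { exists nil, nil. split; [constructor|split; [constructor|]]. intros k _. simpl. unfold vzero. ring. }
  assert (Kadd : forall k1 k2, Kset k1 -> Kset k2 -> Kset (vadd k1 k2)).
  { intros k1 k2 [L1 [L2 [H1 [H2 H3]]]] [L1' [L2' [H1' [H2' H3']]]].
    exists (L1 ++ L1'), (L2 ++ L2'). split; [apply Forall_app; auto|split; [apply Forall_app; auto|]].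
    intros k Hkn. unfold vadd. rewrite H3, H3', !gsum_app by auto. ring. }
  assert (Kscal : forall s kap, 0 < s -> Kset kap -> Kset (vscal s kap)).
  { intros s kap Hs [L1 [L2 [H1 [H2 H3]]]].
    exists (map (fun e => (s * fst e, snd e)) L1), (map (fun e => (s * fst e, snd e)) L2).
    split; [|split].
    - rewrite Forall_forall in *. intros e He. apply in_map_iff in He as [e' [<- He']]. simpl.
      apply Rmult_le_pos; [lra|]. apply H1; auto.
    - rewrite Forall_forall in *. intros e He. apply in_map_iff in He as [e' [<- He']]. simpl.
      destruct (H2 e' He'). split; auto. apply Rmult_le_pos; lra.
    - intros k Hkn. unfold vscal. rewrite H3 by auto. rewrite !gsum_map. simpl.
      rewrite (gsum_ext_in _ _ (fun e => s * fst e * Phi k (t (jk k) (snd e (jk k))))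
                             (fun e => s * (fst e * Phi k (t (jk k) (snd e (jk k)))))) by (intros; ring).
      rewrite (gsum_ext_in _ _ (fun e => s * fst e * Phi k (t is (snd e)))
                             (fun e => s * (fst e * Phi k (t is (snd e))))) by (intros; ring).
      rewrite !gsum_scal. ring. }
  pose (p := fun x => Inf (fun z => exists kap, Kset kap /\ z = normn n (vadd x (vscal (-1) kap)))).
  assert (Hps : forall x, (forall z, (exists kap, Kset kap /\ z = normn n (vadd x (vscal (-1) kap))) -> p x <= z) /\
                 (forall m', (forall z, (exists kap, Kset kap /\ z = normn n (vadd x (vscal (-1) kap))) -> m' <= z) -> m' <= p x)).
  { intros x. unfold p. apply Inf_spec with (b := 0).
    - eexists; exists vzero; split; eauto.
    - intros z [kap [_ ->]]. apply normn_nonneg. }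
  assert (Hple : forall x kap, Kset kap -> p x <= normn n (vadd x (vscal (-1) kap))).
  { intros x kap Hk'. apply (proj1 (Hps x)). eauto. }
  assert (Hsub : sublin p).
  { split.
    - intros x y.
      assert (H1 : forall k2, Kset k2 -> p (vadd x y) - normn n (vadd y (vscal (-1) k2)) <= p x).
      { intros k2 Hk2. apply (proj2 (Hps x)). intros z [k1 [Hk1 ->]].
        pose proof (Hple (vadd x y) (vadd k1 k2) (Kadd _ _ Hk1 Hk2)) as H.
        assert (E : vadd (vadd x y) (vscal (-1) (vadd k1 k2)) = vadd (vadd x (vscal (-1) k1)) (vadd y (vscal (-1) k2)))
          by (apply functional_extensionality; intro; unfold vadd, vscal; ring).
        rewrite E in H. pose proof (normn_triang n (vadd x (vscal (-1) k1)) (vadd y (vscal (-1) k2))). lra. }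
      assert (H2 : p (vadd x y) - p x <= p y).
      { apply (proj2 (Hps y)). intros z [k2 [Hk2 ->]]. specialize (H1 k2 Hk2). lra. }
      lra.
    - intros s x Hs. apply Rle_antisym.
      + assert (p (vscal s x) / s <= p x).
        { apply (proj2 (Hps x)). intros z [kap [Hkap ->]].
          pose proof (Hple (vscal s x) (vscal s kap) (Kscal s kap Hs Hkap)) as H.
          assert (E : vadd (vscal s x) (vscal (-1) (vscal s kap)) = vscal s (vadd x (vscal (-1) kap)))
            by (apply functional_extensionality; intro; unfold vadd, vscal; ring).
          rewrite E, normn_scal in H by lra.
          apply Rmult_le_reg_l with s; auto. unfold Rdiv. replace (s * (p (vscal s x) * / s)) with (p (vscal s x)) by (field; lra). lra. }
        apply Rmult_le_reg_l with (/ s). apply Rinv_0_lt_compat; auto.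
        replace (/ s * (s * p x)) with (p x) by (field; lra). unfold Rdiv in H. lra.
      + apply (proj2 (Hps (vscal s x))). intros z [kap [Hkap ->]].
        pose proof (Hple x (vscal (/ s) kap) (Kscal _ kap (Rinv_0_lt_compat _ Hs) Hkap)) as H.
        assert (E : vadd (vscal s x) (vscal (-1) kap) = vscal s (vadd x (vscal (-1) (vscal (/ s) kap))))
          by (apply functional_extensionality; intro; unfold vadd, vscal; field; lra).
        rewrite E, normn_scal by lra. apply Rmult_le_compat_l; lra. }
  assert (Hdep : dep n p).
  { intros x y Hxy. unfold p. apply Inf_ext. intros z. split; intros [kap [Hkap ->]]; exists kap; split; auto;
    apply normn_dep; intros k Hkn; unfold vadd; rewrite Hxy; auto. }
  assert (Hpa : 0 < p a).
  { assert (eps <= p a); [|lra]. apply (proj2 (Hps a)). intros z [kap [Hkap ->]]. apply Kfar; auto. }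
  destruct (sep n p a Hsub Hdep Hpa) as [lam [Hl Hla]].
  assert (HK : forall kap, Kset kap -> dot n lam kap <= 0).
  { intros kap Hkap. eapply Rle_trans; [apply Hl|]. eapply Rle_trans; [apply (Hple kap kap Hkap)|].
    apply normn_lub; [lra|]. intros k _. unfold vadd, vscal. replace (kap k + -1 * kap k) with 0 by ring. rewrite Rabs_R0. lra. }

  pose (Jl := filt is I).
  assert (HJl : forall j, In j Jl <-> In j I /\ j <> is) by (intros; apply In_filt).
  assert (HnJ : NoDup Jl) by (apply NoDup_filt; auto).
  assert (Hjk : forall k, (k < n)%nat -> In (jk k) Jl) by (intros k Hkn; apply HJl; apply Hk; auto).
  pose (lamj := fun j k => if excluded_middle_informative (jk k = j) then lam k else 0).
  assert (Hreg : forall x, dot n lam x = gsum Jl (fun j => dot n (lamj j) x)).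
  { intros x. assert (forall m, (m <= n)%nat -> dot m lam x = gsum Jl (fun j => dot m (lamj j) x)); [|auto].
    induction m; intros Hm; simpl.
    - rewrite gsum_const. ring.
    - rewrite IHm by lia. rewrite gsum_add. f_equal. symmetry.
      transitivity (gsum Jl (fun j => if excluded_middle_informative (jk m = j) then lam m * x m else 0)).
      + apply gsum_ext_in. intros j _. unfold lamj. destruct (excluded_middle_informative (jk m = j)); ring.
      + apply gsum_indicator; auto. }
  pose (h := fun j w => dot n (lamj j) (fun k => gk k w)).
  assert (hB : forall j, in_B A (h j)) by (intros j; apply in_B_dot; intros; apply Hk; auto).
  pose (phi := fun j mu => integral A mu (h j)).
  assert (Hphi : forall j mu, is_ba A mu -> phi j mu = dot n (lamj j) (fun k => Phi k mu)).
  { intros j mu Hmu. unfold phi, h. rewrite integral_dot; auto. intros; apply Hk; auto. }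
  assert (Hlamj : forall j (x y : vec), (forall k, (k < n)%nat -> jk k = j -> x k = y k) ->
                  dot n (lamj j) x = dot n (lamj j) y).
  { intros j x y H. apply dot_ext_x. intros k Hkn. unfold lamj.
    destruct (excluded_middle_informative (jk k = j)). rewrite H; auto. ring. }
  assert (G1 : forall W : N -> Omega, gsum Jl (fun j => phi j (t j (W j))) <= 0).
  { intros W. pose (kap := fun k => Phi k (t (jk k) (W (jk k)))).
    assert (Hkap : Kset kap).
    { exists ((1, W) :: nil), nil. split; [repeat constructor; simpl; lra|split; [constructor|]].
      intros k _. simpl. unfold kap. ring. }
    pose proof (HK kap Hkap) as H. rewrite Hreg in H.
    erewrite gsum_ext_in; [exact H|]. intros j Hj. simpl. rewrite Hphi by apply tba.
    apply Hlamj. intros k _ <-. reflexivity. }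
  assert (G2 : forall w, ~ eqA A (t is w) ts -> 0 <= gsum Jl (fun j => phi j (t is w))).
  { intros w Hw. pose (kap := vscal (-1) (fun k => Phi k (t is w))).
    assert (Hkap : Kset kap).
    { exists nil, ((1, w) :: nil). split; [constructor|split; [repeat constructor; simpl; auto; lra|]].
      intros k _. simpl. unfold kap, vscal. ring. }
    pose proof (HK kap Hkap) as H. unfold kap in H. rewrite dot_scal, Hreg in H.
    rewrite (gsum_ext_in _ _ _ (fun j => dot n (lamj j) (fun k => Phi k (t is w)))). lra.
    intros j _. apply Hphi, tba. }
  assert (G3 : 0 < gsum Jl (fun j => phi j ts)).
  { rewrite Hreg in Hla. rewrite (gsum_ext_in _ _ _ (fun j => dot n (lamj j) a)). auto.
    intros j _. rewrite Hphi by apply tba. reflexivity. }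
  pose (m := fun j => Sup (fun z => exists w, z = phi j (t j w))).
  assert (Hm : forall j, In j Jl -> (forall w, phi j (t j w) <= m j) /\
                 (forall e, 0 < e -> exists w, m j - e < phi j (t j w))).
  { intros j Hj.
    destruct (Sup_spec (fun z => exists w, z = phi j (t j w)) (- gsum (filt j Jl) (fun j' => phi j' (t j' ws))))
      as [S1 S2].
    - exists (phi j (t j ws)), ws. reflexivity.
    - intros z [w ->]. pose (W := fun j' => if excluded_middle_informative (j' = j) then w else ws).
      pose proof (G1 W) as H. rewrite (gsum_split _ Jl j) in H by auto.
      unfold W at 1 in H. destruct (excluded_middle_informative (j = j)); [|tauto].
      rewrite (gsum_ext_in _ _ _ (fun j' => phi j' (t j' ws))) in H. lra.
      intros j' Hj'. apply In_filt in Hj'. unfold W. destruct (excluded_middle_informative (j' = j)); tauto.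
    - split.
      + intros w. apply S1. eauto.
      + intros e He. apply NNPP. intros Hne.
        assert (m j <= m j - e); [|lra]. apply S2. intros z [w ->]. apply Rnot_lt_le. intros Hlt. apply Hne. eauto. }
  assert (Sm : gsum Jl m <= 0).
  { assert (Hb : forall e, 0 < e -> gsum Jl m <= INR (length Jl) * e).
    { intros e He. pose (W := fun j => epsilon (inhabits ws) (fun w => m j - e < phi j (t j w))).
      assert (HW : forall j, In j Jl -> m j - e < phi j (t j (W j))).
      { intros j Hj. unfold W. apply epsilon_spec. apply (proj2 (Hm j Hj)); auto. }
      pose proof (G1 W).
      assert (gsum Jl m <= gsum Jl (fun j => phi j (t j (W j)) + e)).
      { apply gsum_le_in. intros j Hj. specialize (HW j Hj). lra. }
      rewrite gsum_add, gsum_const in H0. lra. }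
    apply Rnot_lt_le. intros Hpos. pose proof (pos_INR (length Jl)) as HL.
    specialize (Hb (gsum Jl m / (2 * (INR (length Jl) + 1))) ltac:(apply Rdiv_lt_0_compat; lra)).
    assert (INR (length Jl) * (gsum Jl m / (2 * (INR (length Jl) + 1))) < gsum Jl m); [|lra].
    apply Rmult_lt_reg_r with (2 * (INR (length Jl) + 1)); [lra|].
    replace (INR (length Jl) * (gsum Jl m / (2 * (INR (length Jl) + 1))) * (2 * (INR (length Jl) + 1)))
      with (INR (length Jl) * gsum Jl m) by (field; lra). nra. }
  pose (c := fun j => m j - gsum Jl m / INR (length Jl)).
  assert (Hc0 : gsum Jl c = 0) by (apply gsum_center).
  assert (Hcm : forall j, m j <= c j).
  { intros j. unfold c. assert (0 <= - (gsum Jl m / INR (length Jl))); [|lra].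
    unfold Rdiv. rewrite Ropp_mult_distr_l. apply Rmult_le_pos; [lra|].
    destruct (Req_dec (INR (length Jl)) 0) as [->|Hne]. rewrite Rinv_0; lra.
    left. apply Rinv_0_lt_compat. pose proof (pos_INR (length Jl)). lra. }
  pose (f := fun i => if excluded_middle_informative (i = is) then (fun w => gsum Jl (fun j => h j w - c j))
                      else (fun w => c i - h i w)).
  assert (HfJ : forall j, In j Jl -> f j = fun w => c j - h j w).
  { intros j Hj. unfold f. destruct (excluded_middle_informative (j = is)); auto. apply HJl in Hj. tauto. }
  assert (Hfis : f is = fun w => gsum Jl (fun j => h j w - c j)).
  { unfold f. destruct (excluded_middle_informative (is = is)); tauto. }
  assert (HBis : in_B A (f is)).
  { rewrite Hfis. apply (integral_gsum ts Jl (fun j w => h j w - c j)). apply tba.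
    intros; apply in_B_sub_const; auto. }
  assert (V1 : forall j w, In j Jl -> 0 <= integral A (t j w) (f j)).
  { intros j w Hj. rewrite HfJ by auto. rewrite integral_const_sub by (auto; apply tpba).
    fold (phi j (t j w)). pose proof (proj1 (Hm j Hj) w). pose proof (Hcm j). lra. }
  assert (V2 : forall w, integral A (t is w) (f is) = gsum Jl (fun j => phi j (t is w))).
  { intros w. rewrite Hfis.
    rewrite (proj2 (integral_gsum (t is w) Jl (fun j w => h j w - c j) (tba _ _) (fun j _ => in_B_sub_const _ _ (hB j)))).
    rewrite (gsum_ext_in _ _ _ (fun j => phi j (t is w) + - c j)).
    rewrite gsum_add. replace (fun j => - c j) with (fun j => -1 * c j) by (apply functional_extensionality; intros; ring).
    rewrite gsum_scal, Hc0. ring.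
    intros j _. rewrite integral_sub_const; auto. apply tpba. }
  assert (V2a : forall w, 0 <= integral A (t is w) (f is)).
  { intros w. destruct (classic (eqA A (t is w) ts)) as [He|Hne].
    - rewrite (integral_eqA _ _ _ _ _ He). change (0 <= integral A (t is ws) (f is)). rewrite V2. left. exact G3.
    - rewrite V2. apply G2; auto. }
  exists I, f. split; [|split].
  - split; auto. split.
    + intros i Hi. destruct (excluded_middle_informative (i = is)) as [->|Hne]; auto.
      rewrite HfJ by (apply HJl; auto). apply in_B_const_sub; auto.
    + intros w. change (gsum I (fun i => f i w) = 0). rewrite (gsum_split _ I is) by auto. fold Jl.
      rewrite (gsum_ext_in _ Jl _ (fun j => c j - h j w)) by (intros j Hj; rewrite HfJ; auto).
      rewrite Hfis. rewrite <- gsum_add.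
      rewrite (gsum_ext_in _ Jl _ (fun _ => 0)) by (intros; ring). rewrite gsum_const. ring.
  - intros w. exists (fun _ => True). split; [|split; auto].
    + split. exists w; auto. exists (fun _ => True). split. apply A_true, HA. split; auto.
      intros w' i _ _. destruct (tpba i w') as [_ [_ H]]. auto.
    + intros w' _ i Hi. destruct (excluded_middle_informative (i = is)) as [->|Hne]; auto.
      apply V1. apply HJl; auto.
  - exists ws, is. split; auto. rewrite V2. fold ts. auto.
Qed.

End Main.

Theorem theorem6 (N Omega : Type) (A : (Omega -> Prop) -> Prop)
    (M : N -> (Omega -> Prop) -> Prop) (t : N -> Omega -> setfun Omega) :
  is_type_space A M t ->
  (strongly_consistent A t /\
     ~ (exists (I : list N) (f : N -> Omega -> R), acceptable_bet A t I f)) \/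
  (~ strongly_consistent A t /\
     (exists (I : list N) (f : N -> Omega -> R), acceptable_bet A t I f)).
Proof.
  intros HT. destruct (classic (strongly_consistent A t)) as [H|H].
  - left. split; auto. intros Hb. exact (bet_not_sc N Omega A M t HT Hb H).
  - right. split; auto. exact (sc_or_bet N Omega A M t HT H).
Qed.
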